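(* Fix $\alpha\in[0,1]$, assume $\mathcal{N}_M>1$, and let $A_p>0$. Consider the open-loop male-scarcity system on $\mathbb{R}^3_+$: $M'=r\rho Ue^{-\sigma(M+A+U)}-\alpha\frac{A_p}{A_p+A}M-\mu M$, $A'=(1-r)\rho Ue^{-\sigma(M+A+U)}-\nu\frac{\gamma M}{A_p+A}A+\eta U-\delta A$, $U'=\nu\frac{\gamma M}{A_p+A}A-\eta U-\delta U$. (a) If $0<A_p<\tilde A_p^{crit}$, then the basin of attraction of $\mathbf{E}_0=(0,0,0)$ for this system contains $\{\mathbf{X}\in\mathbb{R}^3_+:\ \mathbf{E}_0\le\mathbf{X}<\tilde{\mathbf{E}}_{1,p}\}$. (b) If $A_p>\tilde A_p^{crit}$, then $\mathbf{E}_0$ is globally asymptotically stable on $\mathbb{R}^3_+$ for this system.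
   Context: Parameters: $r\in(0,1)$, $\rho,\sigma,\mu,\delta,\nu,\eta>0$, $\gamma\ge1$; $\mathcal{N}_M:=\frac{\gamma r\rho\nu}{\mu(\delta+\eta)}$. Auxiliary system: $M'=r\rho Ue^{-\sigma M}-\alpha\frac{A_p}{A_p+A}M-\mu M$, $A'=((1-r)\rho+\eta)U-\delta A$, $U'=\nu\frac{\gamma M}{A_p+A}A-(\eta+\delta)U$. $\tilde A_p^{crit}>0$ is the threshold (independent of $A_p$) such that for $A_p>\tilde A_p^{crit}$ the auxiliary system has no positive equilibrium and $\mathbf{E}_0$ is globally asymptotically stable for it on $\mathbb{R}^3_+$, while for $0<A_p<\tilde A_p^{crit}$ the auxiliary system has exactly two positive equilibria $\tilde{\mathbf{E}}_{1,p}<\tilde{\mathbf{E}}_{2,p}$ (componentwise) and the basin of $\mathbf{E}_0$ for the auxiliary system contains $\{\mathbf{E}_0\le\mathbf{X}<\tilde{\mathbf{E}}_{1,p}\}$. Order is componentwise. *)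

(* Defs.v *)
From Stdlib Require Import Reals.
From Coquelicot Require Import Coquelicot.
Open Scope R_scope.

(* Points of R^3 written (M, A, U) = ((M, A), U). *)
Definition vec3 : Type := (R * R * R)%type.
Definition c1 (x : vec3) : R := fst (fst x).
Definition c2 (x : vec3) : R := snd (fst x).
Definition c3 (x : vec3) : R := snd x.

Definition E0 : vec3 := (0, 0, 0).

Definition le3 (x y : vec3) : Prop := c1 x <= c1 y /\ c2 x <= c2 y /\ c3 x <= c3 y.
Definition lt3 (x y : vec3) : Prop := c1 x < c1 y /\ c2 x < c2 y /\ c3 x < c3 y.
Definition nonneg3 (x : vec3) : Prop := le3 E0 x.
Definition pos3 (x : vec3) : Prop := lt3 E0 x.

Definition is_solution (f : vec3 -> vec3) (x : R -> vec3) : Prop :=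
  (forall t, 0 < t ->
     is_derive (fun s => c1 (x s)) t (c1 (f (x t))) /\
     is_derive (fun s => c2 (x s)) t (c2 (f (x t))) /\
     is_derive (fun s => c3 (x s)) t (c3 (f (x t)))) /\
  (forall eps, 0 < eps -> exists del, 0 < del /\
     forall t, 0 <= t < del ->
       Rabs (c1 (x t) - c1 (x 0)) < eps /\
       Rabs (c2 (x t) - c2 (x 0)) < eps /\
       Rabs (c3 (x t) - c3 (x 0)) < eps).

Definition converges_to (x : R -> vec3) (e : vec3) : Prop :=
  is_lim (fun t => c1 (x t)) p_infty (c1 e) /\
  is_lim (fun t => c2 (x t)) p_infty (c2 e) /\
  is_lim (fun t => c3 (x t)) p_infty (c3 e).

Definition in_basin (f : vec3 -> vec3) (e x0 : vec3) : Prop :=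
  (exists x, is_solution f x /\ x 0 = x0) /\
  (forall x, is_solution f x -> x 0 = x0 -> converges_to x e).

Definition stable_on_nonneg (f : vec3 -> vec3) (e : vec3) : Prop :=
  forall eps, 0 < eps -> exists del, 0 < del /\
    forall x, is_solution f x -> nonneg3 (x 0) ->
      Rabs (c1 (x 0) - c1 e) < del -> Rabs (c2 (x 0) - c2 e) < del ->
      Rabs (c3 (x 0) - c3 e) < del ->
      forall t, 0 <= t ->
        Rabs (c1 (x t) - c1 e) < eps /\ Rabs (c2 (x t) - c2 e) < eps /\
        Rabs (c3 (x t) - c3 e) < eps.

Definition GAS_on_nonneg (f : vec3 -> vec3) (e : vec3) : Prop :=
  stable_on_nonneg f e /\ forall x0, nonneg3 x0 -> in_basin f e x0.

Definition is_equilibrium (f : vec3 -> vec3) (e : vec3) : Prop := f e = E0.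

Definition main_field (r rho sigma mu delta nu eta gamma alpha Ap : R)
  (X : vec3) : vec3 :=
  let M := c1 X in let A := c2 X in let U := c3 X in
  ( r * rho * U * exp (- sigma * (M + A + U)) - alpha * (Ap / (Ap + A)) * M - mu * M,
    (1 - r) * rho * U * exp (- sigma * (M + A + U)) - nu * (gamma * M / (Ap + A)) * A
      + eta * U - delta * A,
    nu * (gamma * M / (Ap + A)) * A - eta * U - delta * U ).

Definition aux_field (r rho sigma mu delta nu eta gamma alpha Ap : R)
  (X : vec3) : vec3 :=
  let M := c1 X in let A := c2 X in let U := c3 X in
  ( r * rho * U * exp (- sigma * M) - alpha * (Ap / (Ap + A)) * M - mu * M,
    ((1 - r) * rho + eta) * U - delta * A,
    nu * (gamma * M / (Ap + A)) * A - (eta + delta) * U ).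

Definition N_M (r rho mu delta nu eta gamma : R) : R :=
  gamma * r * rho * nu / (mu * (delta + eta)).

(* Main.v *)
Require Import Defs.
From Stdlib Require Import Reals Lra Psatz.
From Coquelicot Require Import Coquelicot.
Require Import Defs.
Open Scope R_scope.

Lemma cont_eps (f : R -> R) (x : R) :
  (forall eps, 0 < eps -> exists del, 0 < del /\ forall y, Rabs (y - x) < del -> Rabs (f y - f x) < eps) ->
  continuity_pt f x.
Proof.
  intros H eps Heps. destruct (H eps Heps) as [d [Hd Hy]].
  exists d; split; [lra|]. intros y [_ Hy2]. simpl in *. unfold R_dist in *. apply Hy; auto.
Qed.

Lemma cont_lip (f : R -> R) (C : R) :
  (forall s t, Rabs (f t - f s) <= C * Rabs (t - s)) -> forall x, continuity_pt f x.
Proof.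
  intros H x. apply cont_eps. intros eps Heps.
  exists (eps / (Rabs C + 1)). split.
  { apply Rdiv_lt_0_compat; [lra|]. pose proof (Rabs_pos C); lra. }
  intros y Hy. eapply Rle_lt_trans. apply H.
  assert (0 < Rabs C + 1) by (pose proof (Rabs_pos C); lra).
  apply Rle_lt_trans with (Rabs C * Rabs (y - x)).
  { apply Rmult_le_compat_r. apply Rabs_pos. apply RRle_abs. }
  apply Rle_lt_trans with ((Rabs C + 1) * Rabs (y - x)).
  { pose proof (Rabs_pos (y - x)); nra. }
  apply Rmult_lt_reg_l with (/ (Rabs C + 1)). apply Rinv_0_lt_compat; lra.
  rewrite <- Rmult_assoc, Rinv_l by lra. unfold Rdiv in Hy. lra.
Qed.

Definition mn (z : R) := Rmin z 0.
Definition msq (z : R) := mn z * mn z.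

Lemma mn_le0 z : mn z <= 0.
Proof. unfold mn; apply Rmin_r. Qed.
Lemma mn_neg z : z < 0 -> mn z = z.
Proof. unfold mn; intros; rewrite Rmin_left; lra. Qed.
Lemma mn_pos z : 0 <= z -> mn z = 0.
Proof. unfold mn; intros; rewrite Rmin_right; lra. Qed.
Lemma msq_ge0 z : 0 <= msq z.
Proof. unfold msq. nra. Qed.

Lemma is_derive_msq z : is_derive msq z (2 * mn z).
Proof.
  apply is_derive_Reals. intros eps Heps.
  exists (mkposreal eps Heps). intros h Hh Hhe. simpl in Hhe.
  assert (E : Rabs (msq (z + h) - msq z - 2 * mn z * h) <= h * h).
  { unfold msq, mn. destruct (Rle_dec z 0); destruct (Rle_dec (z+h) 0).
    - rewrite !Rmin_left by lra. replace ((z+h)*(z+h) - z*z - 2*z*h) with (h*h) by ring.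
      rewrite Rabs_right; nra.
    - rewrite (Rmin_left z) by lra. rewrite (Rmin_right (z+h)) by lra.
      rewrite Rabs_right; nra.
    - rewrite (Rmin_right z) by lra. rewrite (Rmin_left (z+h)) by lra.
      rewrite Rabs_right; nra.
    - rewrite !Rmin_right by lra. rewrite Rabs_right; nra. }
  replace ((msq (z + h) - msq z) / h - 2 * mn z) with ((msq (z + h) - msq z - 2 * mn z * h) / h)
    by (field; auto).
  unfold Rdiv. rewrite Rabs_mult, Rabs_inv.
  apply Rle_lt_trans with (h * h * / Rabs h).
  { apply Rmult_le_compat_r. left; apply Rinv_0_lt_compat, Rabs_pos_lt; auto. auto. }
  replace (h * h) with (Rabs h * Rabs h).
  2:{ rewrite <- Rabs_mult. rewrite Rabs_right; nra. }
  rewrite Rmult_assoc, Rinv_r. lra. apply Rabs_no_R0; auto.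
Qed.

Lemma is_derive_msq_comp (f : R -> R) t l :
  is_derive f t l -> is_derive (fun s => msq (f s)) t (2 * mn (f t) * l).
Proof.
  intros H. eapply is_derive_ext. intros; reflexivity.
  replace (2 * mn (f t) * l) with (scal l (2 * mn (f t))).
  apply (is_derive_comp msq f t (2 * mn (f t)) l); auto. apply is_derive_msq.
  unfold scal; simpl. unfold mult; simpl. ring.
Qed.

Lemma MVT_open (f df : R -> R) (a b : R) : a < b ->
  (forall x, a < x < b -> is_derive f x (df x)) ->
  (forall x, a <= x <= b -> continuity_pt f x) ->
  exists c, a < c < b /\ f b - f a = df c * (b - a).
Proof.
  intros Hab Hd Hc.
  assert (pr1 : forall c, a < c < b -> derivable_pt f c).
  { intros c Hc'. exists (df c). apply is_derive_Reals. auto. }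
  assert (pr2 : forall c, a < c < b -> derivable_pt id c).
  { intros c _. apply derivable_pt_id. }
  destruct (MVT f id a b pr1 pr2 Hab Hc (fun c _ => derivable_continuous_pt _ _ (derivable_pt_id c))) as [c [P Heq]].
  exists c. split; auto.
  rewrite (derive_pt_eq_0 f c (df c) (pr1 c P)) in Heq by (apply is_derive_Reals; auto).
  rewrite (derive_pt_eq_0 id c 1 (pr2 c P)) in Heq by apply derivable_pt_lim_id.
  unfold id in Heq. lra.
Qed.

Lemma threshold_gronwall (V dV : R -> R) (c : R) :
  0 < c ->
  (forall t, continuity_pt V t) ->
  (forall t, 0 < t -> is_derive V t (dV t)) ->
  (forall t, 0 <= V t) -> V 0 = 0 ->
  (forall T, 0 < T -> exists K, forall t, 0 < t <= T -> V t < c -> dV t <= K * V t) ->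
  forall t, 0 <= t -> V t = 0.
Proof.
  intros Hc Hcont Hder Hpos H0 HK t1 Ht1.
  destruct (Req_dec t1 0) as [->|Hne]; auto.
  destruct (HK t1 ltac:(lra)) as [K0 HK0].
  set (K := Rmax K0 0).
  assert (HKp : 0 <= K) by apply Rmax_r.
  assert (HKK : forall t, 0 < t <= t1 -> V t < c -> dV t <= K * V t).
  { intros t Ht Hv. eapply Rle_trans. apply HK0; auto. apply Rmult_le_compat_r; auto. apply Rmax_l. }
  destruct (Req_dec (V t1) 0) as [|Hv1]; auto. exfalso.
  set (E := fun s => 0 <= s <= t1 /\ V s = 0).
  assert (Hb : bound E). { exists t1. intros s [Hs _]. lra. }
  assert (He : exists x, E x). { exists 0. split; auto; lra. }
  destruct (completeness E Hb He) as [s0 [Hub Hlub]].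
  assert (Hs0 : 0 <= s0 <= t1).
  { split. apply Hub. split; auto; lra. apply Hlub. intros s [Hs _]; lra. }
  assert (HVs0 : V s0 = 0).
  { destruct (Req_dec (V s0) 0); auto. exfalso.
    assert (Hp : 0 < V s0) by (pose proof (Hpos s0); lra).
    destruct (Hcont s0 (V s0) Hp) as [d [Hd Hdd]].
    assert (Hup : is_upper_bound E (Rmax 0 (s0 - d/2))).
    { intros s [Hs Hvs]. destruct (Rle_dec s (Rmax 0 (s0 - d/2))) as [|Hn]; auto. exfalso.
      assert (s <= s0) by (apply Hub; split; auto).
      assert (Hdist : R_dist s s0 < d).
      { unfold R_dist. rewrite Rabs_left1 by lra. pose proof (Rmax_r 0 (s0 - d/2)). lra. }
      assert (Hneq : s0 <> s) by (intro; subst; lra).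
      specialize (Hdd s (conj (conj I Hneq) Hdist)).
      simpl in Hdd. unfold R_dist in Hdd. rewrite Hvs in Hdd.
      rewrite Rabs_left1 in Hdd by lra. lra. }
    specialize (Hlub _ Hup).
    destruct (Rle_dec 0 (s0 - d/2)).
    - rewrite Rmax_right in Hlub by lra. lra.
    - rewrite Rmax_left in Hlub by lra.
      assert (s0 = 0) by lra. subst. lra. }
  assert (Hlt : s0 < t1). { destruct Hs0 as [_ [|]]; auto. subst; lra. }
  destruct (Hcont s0 c Hc) as [d [Hd Hdd]].
  set (s1 := Rmin t1 (s0 + Rmin (d/2) (1 / (2 * K + 2)))).
  assert (Hm : 0 < Rmin (d/2) (1 / (2*K+2))).
  { apply Rmin_Rgt_r; split. lra. apply Rdiv_lt_0_compat; lra. }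
  assert (Hs1 : s0 < s1 <= t1).
  { unfold s1. split. apply Rmin_Rgt_r; split; lra. apply Rmin_l. }
  assert (Hs1b : s1 - s0 <= Rmin (d/2) (1 / (2*K+2))).
  { unfold s1. pose proof (Rmin_r t1 (s0 + Rmin (d/2) (1 / (2*K+2)))). lra. }
  assert (Hsmall : forall s, s0 <= s <= s1 -> V s < c).
  { intros s Hs. destruct (Req_dec s s0) as [->|]; [lra|].
    assert (Hdist : R_dist s s0 < d).
    { unfold R_dist. rewrite Rabs_right by lra. pose proof (Rmin_l (d/2) (1/(2*K+2))). lra. }
    assert (Hneq : s0 <> s) by auto.
    specialize (Hdd s (conj (conj I Hneq) Hdist)).
    simpl in Hdd. unfold R_dist in Hdd. rewrite HVs0 in Hdd.
    rewrite Rabs_right in Hdd by (rewrite Rminus_0_r; apply Rle_ge, Hpos). lra. }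
  destruct (continuity_ab_maj V s0 s1 ltac:(lra) (fun c _ => Hcont c)) as [p [Hp Hpr]].
  assert (HVp : V p = 0).
  { destruct (Req_dec p s0) as [->|Hps]; auto.
    assert (Hsp : s0 < p) by (destruct Hpr as [[|] _]; [lra| congruence]).
    destruct (MVT_open V dV s0 p Hsp) as [xi [Hxi Heq]].
    { intros x Hx. apply Hder; lra. }
    { intros x _. apply Hcont. }
    rewrite HVs0 in Heq.
    assert (Hd1 : dV xi <= K * V xi) by (apply HKK; [lra|apply Hsmall; lra]).
    assert (Hmax : V xi <= V p) by (apply Hp; lra).
    assert (Hpp := Hpos p). assert (Hpx := Hpos xi).
    assert (Hfrac : K * (p - s0) <= 1/2).
    { assert (p - s0 <= 1 / (2*K+2)) by (pose proof (Rmin_r (d/2) (1/(2*K+2))); lra).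
      apply Rle_trans with (K * (1 / (2*K+2))). apply Rmult_le_compat_l; lra.
      unfold Rdiv. rewrite Rmult_1_l. apply Rmult_le_reg_r with (2*K+2). lra.
      rewrite Rmult_assoc, Rinv_l by lra. lra. }
    assert (V p <= K * V p * (p - s0)).
    { rewrite Rminus_0_r in Heq. rewrite Heq.
      apply Rmult_le_compat_r. lra. apply Rle_trans with (K * V xi); auto. apply Rmult_le_compat_l; lra. }
    nra. }
  assert (HVs1 : V s1 = 0).
  { assert (V s1 <= V p) by (apply Hp; lra). pose proof (Hpos s1). lra. }
  assert (s1 <= s0) by (apply Hub; split; auto; lra). lra.
Qed.

Lemma der_max (g dg : R -> R) t : 0 < t -> is_derive g t (dg t) ->
  is_derive (fun s => g (Rmax s 0)) t (dg t).
Proof.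
  intros Ht H. apply is_derive_ext_loc with g; auto.
  exists (mkposreal t Ht). intros y Hy. simpl.
  unfold ball in Hy; simpl in Hy; unfold AbsRing_ball, abs, minus, plus, opp in Hy; simpl in Hy.
  rewrite Rmax_left; auto. apply Rabs_def2 in Hy. lra.
Qed.

Lemma cont_max (g dg : R -> R) :
  (forall t, 0 < t -> is_derive g t (dg t)) ->
  (forall eps, 0 < eps -> exists del, 0 < del /\ forall t, 0 <= t < del -> Rabs (g t - g 0) < eps) ->
  forall t, continuity_pt (fun s => g (Rmax s 0)) t.
Proof.
  intros Hd Hr t.
  destruct (Rlt_le_dec 0 t) as [Ht|Ht].
  - apply continuity_pt_filterlim.
    assert (Hc : continuous (fun s => g (Rmax s 0)) t).
    { apply (ex_derive_continuous (K:=R_AbsRing) (V:=R_NormedModule)). exists (dg t). apply der_max; auto. }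
    exact Hc.
  - destruct (Rle_lt_or_eq_dec t 0 Ht) as [Hlt|Heq].
    + apply cont_eps. intros eps Heps. exists (-t). split; [lra|]. intros y Hy.
      apply Rabs_def2 in Hy. rewrite !Rmax_right by lra. rewrite Rminus_eq_0, Rabs_R0; auto.
    + subst. apply cont_eps. intros eps Heps. destruct (Hr eps Heps) as [d [Hd1 Hdd]].
      exists d; split; auto. intros y Hy. rewrite Rminus_0_r in Hy.
      rewrite (Rmax_left 0 0) by lra.
      destruct (Rle_dec y 0).
      * rewrite Rmax_right by lra. rewrite Rminus_eq_0, Rabs_R0; auto.
      * rewrite Rmax_left by lra. apply Hdd. apply Rabs_def2 in Hy. lra.
Qed.

Definition xh (x : R -> vec3) (t : R) : vec3 := x (Rmax t 0).

Lemma sol_props (f : vec3 -> vec3) (x : R -> vec3) : is_solution f x ->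
  (forall t, continuity_pt (fun s => c1 (xh x s)) t) /\
  (forall t, continuity_pt (fun s => c2 (xh x s)) t) /\
  (forall t, continuity_pt (fun s => c3 (xh x s)) t) /\
  (forall t, 0 < t -> is_derive (fun s => c1 (xh x s)) t (c1 (f (x t)))) /\
  (forall t, 0 < t -> is_derive (fun s => c2 (xh x s)) t (c2 (f (x t)))) /\
  (forall t, 0 < t -> is_derive (fun s => c3 (xh x s)) t (c3 (f (x t)))).
Proof.
  intros [Hd Hr]. unfold xh. clear -Hd Hr.
  split; [|split; [|split; [|split; [|split]]]].
  - apply (cont_max (fun s => c1 (x s)) (fun t => c1 (f (x t)))). intros t Ht; apply Hd; auto.
    intros eps He; destruct (Hr eps He) as [d [Hd0 Hdd]]; exists d; split; auto; intros; apply Hdd; auto.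
  - apply (cont_max (fun s => c2 (x s)) (fun t => c2 (f (x t)))). intros t Ht; apply Hd; auto.
    intros eps He; destruct (Hr eps He) as [d [Hd0 Hdd]]; exists d; split; auto; intros; apply Hdd; auto.
  - apply (cont_max (fun s => c3 (x s)) (fun t => c3 (f (x t)))). intros t Ht; apply Hd; auto.
    intros eps He; destruct (Hr eps He) as [d [Hd0 Hdd]]; exists d; split; auto; intros; apply Hdd; auto.
  - intros t Ht. apply (der_max (fun s => c1 (x s)) (fun t => c1 (f (x t)))); auto; apply Hd; auto.
  - intros t Ht. apply (der_max (fun s => c2 (x s)) (fun t => c2 (f (x t)))); auto; apply Hd; auto.
  - intros t Ht. apply (der_max (fun s => c3 (x s)) (fun t => c3 (f (x t)))); auto; apply Hd; auto.
Qed.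

Lemma xh_pos x t : 0 <= t -> xh x t = x t.
Proof. intros; unfold xh; rewrite Rmax_left; auto. Qed.

Lemma cont_bound (g : R -> R) T : 0 <= T -> (forall t, continuity_pt g t) ->
  exists B, 0 <= B /\ forall t, 0 <= t <= T -> Rabs (g t) <= B.
Proof.
  intros HT Hc.
  destruct (continuity_ab_maj g 0 T HT (fun c _ => Hc c)) as [p1 [H1 _]].
  destruct (continuity_ab_maj (fun t => - g t) 0 T HT (fun c _ => continuity_pt_opp _ _ (Hc c))) as [p2 [H2 _]].
  exists (Rabs (g p1) + Rabs (g p2)). split. pose proof (Rabs_pos (g p1)); pose proof (Rabs_pos (g p2)); lra.
  intros t Ht. specialize (H1 t Ht). specialize (H2 t Ht).
  pose proof (Rle_abs (g p1)). pose proof (Rle_abs (- g p2)). rewrite Rabs_Ropp in *.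
  pose proof (Rabs_pos (g p1)); pose proof (Rabs_pos (g p2)).
  apply Rabs_le; lra.
Qed.

Lemma comb_ineq (m1 m2 m3 mi d k : R) :
  m1 <= 0 -> m2 <= 0 -> m3 <= 0 -> 0 <= k -> (mi = m1 \/ mi = m2 \/ mi = m3) ->
  (mi < 0 -> d >= k * (m1 + m2 + m3)) ->
  2 * mi * d <= 4 * k * (m1 * m1 + m2 * m2 + m3 * m3).
Proof.
  intros H1 H2 H3 Hk Hmi Hd.
  destruct (Req_dec mi 0) as [->|Hne].
  - rewrite Rmult_0_r, Rmult_0_l. apply Rmult_le_pos. lra. nra.
  - assert (Hm : mi < 0) by (destruct Hmi as [ -> | [ -> | -> ] ]; lra).
    specialize (Hd Hm).
    assert (Hq : 2 * mi * d <= 2 * mi * (k * (m1 + m2 + m3))) by nra.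
    replace (2 * mi * (k * (m1 + m2 + m3))) with (k * (2*mi*m1 + 2*mi*m2 + 2*mi*m3)) in Hq by ring.
    assert (k * (2*mi*m1 + 2*mi*m2 + 2*mi*m3) <= k * (4 * (m1 * m1 + m2 * m2 + m3 * m3))).
    { apply Rmult_le_compat_l; auto.
      pose proof (Rle_0_sqr (m1 - m2)); pose proof (Rle_0_sqr (m1 - m3)); pose proof (Rle_0_sqr (m2 - m3)).
      pose proof (Rle_0_sqr m1); pose proof (Rle_0_sqr m2); pose proof (Rle_0_sqr m3). unfold Rsqr in *.
      destruct Hmi as [ -> | [ -> | -> ] ]; lra. }
    lra.
Qed.

Lemma nonneg3_lem (u1 u2 u3 d1 d2 d3 : R -> R) (c : R) :
  0 < c ->
  (forall t, continuity_pt u1 t) -> (forall t, continuity_pt u2 t) -> (forall t, continuity_pt u3 t) ->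
  (forall t, 0 < t -> is_derive u1 t (d1 t)) ->
  (forall t, 0 < t -> is_derive u2 t (d2 t)) ->
  (forall t, 0 < t -> is_derive u3 t (d3 t)) ->
  (forall t, t <= 0 -> 0 <= u1 t /\ 0 <= u2 t /\ 0 <= u3 t) ->
  (forall T, 0 < T -> exists k, 0 <= k /\ forall t, 0 < t <= T ->
      msq (u1 t) + msq (u2 t) + msq (u3 t) < c ->
      (u1 t < 0 -> d1 t >= k * (mn (u1 t) + mn (u2 t) + mn (u3 t))) /\
      (u2 t < 0 -> d2 t >= k * (mn (u1 t) + mn (u2 t) + mn (u3 t))) /\
      (u3 t < 0 -> d3 t >= k * (mn (u1 t) + mn (u2 t) + mn (u3 t)))) ->
  forall t, 0 <= t -> 0 <= u1 t /\ 0 <= u2 t /\ 0 <= u3 t.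
Proof.
  intros Hc C1 C2 C3 D1 D2 D3 H0 HK.
  set (V := fun t => msq (u1 t) + msq (u2 t) + msq (u3 t)).
  set (dV := fun t => 2 * mn (u1 t) * d1 t + 2 * mn (u2 t) * d2 t + 2 * mn (u3 t) * d3 t).
  assert (HV : forall t, 0 <= t -> V t = 0).
  { apply (threshold_gronwall V dV c Hc).
    - intros t. unfold V, msq, mn.
      assert (Hm : forall u, (forall t, continuity_pt u t) -> continuity_pt (fun t => Rmin (u t) 0 * Rmin (u t) 0) t).
      { intros u Hu. apply continuity_pt_mult; apply continuity_pt_comp with (f1 := u) (f2 := fun z => Rmin z 0); auto;
        apply cont_lip with 1; intros a b; rewrite Rmult_1_l; unfold Rmin;
        destruct (Rle_dec a 0), (Rle_dec b 0); apply Rabs_le; split; try lra;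
        pose proof (Rle_abs (b - a)); pose proof (Rle_abs (-(b-a))); rewrite Rabs_Ropp in *; lra. }
      apply continuity_pt_plus; [apply continuity_pt_plus|]; apply Hm; auto.
    - intros t Ht. unfold V, dV.
      apply (is_derive_plus (K:=R_AbsRing) (V:=R_NormedModule)); [apply (is_derive_plus (K:=R_AbsRing) (V:=R_NormedModule))|];
        apply is_derive_msq_comp; auto.
    - intros t. unfold V. pose proof (msq_ge0 (u1 t)); pose proof (msq_ge0 (u2 t)); pose proof (msq_ge0 (u3 t)); lra.
    - unfold V. destruct (H0 0 ltac:(lra)) as [a [b e]]. unfold msq. rewrite !mn_pos by auto. ring.
    - intros T HT. destruct (HK T HT) as [k [Hk Hkk]]. exists (12 * k).
      intros t Ht Hv. destruct (Hkk t Ht Hv) as [E1 [E2 E3]]. unfold dV, V, msq.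
      pose proof (mn_le0 (u1 t)); pose proof (mn_le0 (u2 t)); pose proof (mn_le0 (u3 t)).
      assert (F1 : 2 * mn (u1 t) * d1 t <= 4 * k * (mn (u1 t) * mn (u1 t) + mn (u2 t) * mn (u2 t) + mn (u3 t) * mn (u3 t))).
      { apply comb_ineq; auto. intros Hm. apply E1. destruct (Rlt_le_dec (u1 t) 0); auto. rewrite mn_pos in Hm; lra. }
      assert (F2 : 2 * mn (u2 t) * d2 t <= 4 * k * (mn (u1 t) * mn (u1 t) + mn (u2 t) * mn (u2 t) + mn (u3 t) * mn (u3 t))).
      { apply comb_ineq; auto. intros Hm. apply E2. destruct (Rlt_le_dec (u2 t) 0); auto. rewrite mn_pos in Hm; lra. }
      assert (F3 : 2 * mn (u3 t) * d3 t <= 4 * k * (mn (u1 t) * mn (u1 t) + mn (u2 t) * mn (u2 t) + mn (u3 t) * mn (u3 t))).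
      { apply comb_ineq; auto. intros Hm. apply E3. destruct (Rlt_le_dec (u3 t) 0); auto. rewrite mn_pos in Hm; lra. }
      lra. }
  intros t Ht. specialize (HV t Ht). unfold V in HV.
  pose proof (msq_ge0 (u1 t)); pose proof (msq_ge0 (u2 t)); pose proof (msq_ge0 (u3 t)).
  assert (Z : forall u, msq u = 0 -> 0 <= u).
  { intros u Hu. destruct (Rlt_le_dec u 0); auto. unfold msq in Hu. rewrite mn_neg in Hu; nra. }
  repeat split; apply Z; lra.
Qed.

Lemma exp_mono x y : x <= y -> exp x <= exp y.
Proof. intros [H|H]. left; apply exp_increasing; auto. subst; lra. Qed.

Lemma exp_le1 x : x <= 0 -> exp x <= 1.
Proof. intros; rewrite <- exp_0; apply exp_mono; auto. Qed.

Lemma g_bounds Ap A : 0 < Ap -> 0 <= A -> 0 < Ap / (Ap + A) <= 1.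
Proof.
  intros. split. apply Rdiv_lt_0_compat; lra.
  apply Rmult_le_reg_r with (Ap + A). lra. unfold Rdiv; rewrite Rmult_assoc, Rinv_l by lra. lra.
Qed.

Lemma g_diff Ap Ax Ay : 0 < Ap -> 0 <= Ax -> 0 <= Ay ->
  Ap / (Ap + Ax) - Ap / (Ap + Ay) >= mn (Ay - Ax) / Ap.
Proof.
  intros HAp Hx Hy.
  replace (Ap / (Ap + Ax) - Ap / (Ap + Ay)) with (Ap * (Ay - Ax) / ((Ap + Ax) * (Ap + Ay))) by (field; lra).
  destruct (Rle_dec Ax Ay).
  - rewrite mn_pos by lra. unfold Rdiv. rewrite Rmult_0_l. apply Rle_ge.
    apply Rmult_le_pos. nra. left; apply Rinv_0_lt_compat; nra.
  - rewrite mn_neg by lra.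
    apply Rle_ge. unfold Rdiv.
    set (d := Ay - Ax). assert (d < 0) by (unfold d; lra).
    assert (Hp : Ap * Ap <= (Ap + Ax) * (Ap + Ay)) by nra.
    assert (0 < (Ap + Ax) * (Ap + Ay)) by nra.
    apply Rmult_le_reg_r with (Ap * ((Ap + Ax) * (Ap + Ay))). nra.
    replace (d * / Ap * (Ap * ((Ap + Ax) * (Ap + Ay)))) with (d * ((Ap + Ax) * (Ap + Ay))) by (field; lra).
    replace (Ap * d * / ((Ap + Ax) * (Ap + Ay)) * (Ap * ((Ap + Ax) * (Ap + Ay)))) with (Ap * Ap * d) by (field; lra).
    nra.
Qed.

Lemma w_eq Ap A : 0 < Ap + A -> A / (Ap + A) = 1 - Ap / (Ap + A).
Proof. intros; field; lra. Qed.

Lemma hA_eq nu gamma M Ap A : 0 < Ap + A -> nu * (gamma * M / (Ap + A)) * A = nu * gamma * M * (1 - Ap / (Ap + A)).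
Proof. intros; field; lra. Qed.

Lemma w_neg Ap A : 0 < Ap -> A < 0 -> - Ap / 2 < A -> 2 * A / Ap <= 1 - Ap / (Ap + A) <= 0.
Proof.
  intros HAp HA HA2. rewrite <- w_eq by lra. split.
  - apply Rmult_le_reg_r with (Ap * (Ap + A)). nra.
    replace (2 * A / Ap * (Ap * (Ap + A))) with (2 * A * (Ap + A)) by (field; lra).
    replace (A / (Ap + A) * (Ap * (Ap + A))) with (A * Ap) by (field; lra). nra.
  - unfold Rdiv. assert (0 < / (Ap + A)) by (apply Rinv_0_lt_compat; lra). nra.
Qed.

Section Fields.
Variables (r rho sigma mu delta nu eta gamma alpha Ap : R).
Hypotheses (Hr : 0 < r < 1) (Hrho : 0 < rho) (Hsigma : 0 < sigma) (Hmu : 0 < mu)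
  (Hdelta : 0 < delta) (Hnu : 0 < nu) (Heta : 0 < eta) (Hgamma : 1 <= gamma)
  (Halpha : 0 <= alpha <= 1) (HAp : 0 < Ap).

Definition kap (B : R) := r * rho * exp (3 * sigma * B) + (1 - r) * rho * exp (3 * sigma * B) + eta + rho + nu * gamma * (1 + 2 * B / Ap) + alpha * B / Ap.

Lemma kap_pos B : 0 <= B -> 0 <= kap B.
Proof.
  intros HB. unfold kap. pose proof (exp_pos (3 * sigma * B)).
  assert (0 <= B / Ap) by (unfold Rdiv; apply Rmult_le_pos; [lra| left; apply Rinv_0_lt_compat; lra]).
  assert (0 <= 2 * B / Ap) by (unfold Rdiv in *; lra).
  assert (0 <= alpha * B / Ap) by (unfold Rdiv in *; rewrite Rmult_assoc; apply Rmult_le_pos; lra).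
  assert (0 <= nu * gamma) by nra.
  assert (0 <= nu * gamma * (1 + 2 * B / Ap)) by (apply Rmult_le_pos; lra).
  assert (0 <= r * rho * exp (3 * sigma * B)) by (apply Rmult_le_pos; nra).
  assert (0 <= (1 - r) * rho * exp (3 * sigma * B)) by (apply Rmult_le_pos; nra).
  lra.
Qed.

Lemma sum_mn_scale (a k m1 m2 m3 : R) : 0 <= a <= k -> m1 <= 0 -> m2 <= 0 -> m3 <= 0 ->
  a * m1 >= k * (m1 + m2 + m3) /\ a * m2 >= k * (m1 + m2 + m3) /\ a * m3 >= k * (m1 + m2 + m3).
Proof. intros. repeat split; nra. Qed.

End Fields.

Lemma combine_k (d a1 a2 a3 k m1 m2 m3 : R) : 0 <= a1 <= k -> 0 <= a2 <= k -> 0 <= a3 <= k ->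
  m1 <= 0 -> m2 <= 0 -> m3 <= 0 -> d >= a1 * m1 + a2 * m2 + a3 * m3 -> d >= k * (m1 + m2 + m3).
Proof. intros. nra. Qed.

Lemma mul_lower_U (c U e E : R) : 0 <= c -> 0 < e <= E -> c * U * e >= c * E * mn U.
Proof.
  intros Hc He. destruct (Rlt_le_dec U 0).
  - rewrite mn_neg by auto. assert (U * e >= U * E) by nra. nra.
  - rewrite mn_pos by auto. rewrite Rmult_0_r. apply Rle_ge. apply Rmult_le_pos; [apply Rmult_le_pos|]; lra.
Qed.

Section F.
Variables (r rho sigma mu delta nu eta gamma alpha Ap : R).
Hypotheses (Hr : 0 < r < 1) (Hrho : 0 < rho) (Hsigma : 0 < sigma) (Hmu : 0 < mu)
  (Hdelta : 0 < delta) (Hnu : 0 < nu) (Heta : 0 < eta) (Hgamma : 1 <= gamma)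
  (Halpha : 0 <= alpha <= 1) (HAp : 0 < Ap).

Let E B := exp (3 * sigma * B).

Lemma B_facts B : 0 <= B -> 0 <= 2 * B / Ap /\ 0 <= B / Ap /\ 0 <= nu * gamma /\ 0 <= alpha * B / Ap.
Proof.
  intros HB. assert (0 <= B / Ap) by (unfold Rdiv; apply Rmult_le_pos; [lra| left; apply Rinv_0_lt_compat; lra]).
  repeat split; unfold Rdiv in *; try nra.
Qed.

Lemma Mw_lower (M A B : R) : Rabs M <= B -> Rabs A <= B -> - Ap / 2 < A ->
  M * (1 - Ap / (Ap + A)) >= 1 * mn M + (2 * B / Ap) * mn A.
Proof.
  intros HM HA HA2. apply Rabs_le_between in HM. apply Rabs_le_between in HA.
  destruct (Rlt_le_dec A 0) as [An|Ap0].
  - pose proof (w_neg Ap A HAp An HA2) as [W1 W2].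
    rewrite (mn_neg A) by auto.
    destruct (Rlt_le_dec M 0) as [Mn|Mp].
    + rewrite mn_neg by auto. assert (M * (1 - Ap / (Ap + A)) >= 0) by nra.
      assert (2 * B / Ap * A <= 0). { unfold Rdiv. assert (0 <= B * / Ap) by (apply Rmult_le_pos; [lra|left; apply Rinv_0_lt_compat; lra]). nra. }
      lra.
    + rewrite mn_pos by auto.
      assert (M * (1 - Ap / (Ap + A)) >= M * (2 * A / Ap)) by nra.
      assert (M * (2 * A / Ap) >= B * (2 * A / Ap)).
      { assert (2 * A / Ap <= 0). { unfold Rdiv. assert (0 < / Ap) by (apply Rinv_0_lt_compat; lra). nra. } nra. }
      replace (2 * B / Ap * A) with (B * (2 * A / Ap)) by (field; lra). lra.
  - rewrite (mn_pos A) by auto. pose proof (g_bounds Ap A HAp Ap0) as [G1 G2].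
    destruct (Rlt_le_dec M 0) as [Mn|Mp].
    + rewrite mn_neg by auto. nra.
    + rewrite mn_pos by auto. nra.
Qed.

Lemma main_ineq (M A U B : R) : 0 <= B -> Rabs M <= B -> Rabs A <= B -> Rabs U <= B -> - Ap / 2 < A ->
  let F := main_field r rho sigma mu delta nu eta gamma alpha Ap (M, A, U) in
  (M < 0 -> c1 F >= kap r rho sigma nu eta gamma alpha Ap B * (mn M + mn A + mn U)) /\
  (A < 0 -> c2 F >= kap r rho sigma nu eta gamma alpha Ap B * (mn M + mn A + mn U)) /\
  (U < 0 -> c3 F >= kap r rho sigma nu eta gamma alpha Ap B * (mn M + mn A + mn U)).
Proof.
  intros HB HM HA HU HA2 F.
  pose proof (B_facts B HB) as [B1 [B2 [B3 B4]]].
  assert (He : 0 < exp (- sigma * (M + A + U)) <= E B).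
  { split. apply exp_pos. unfold E. apply exp_mono.
    apply Rabs_le_between in HM; apply Rabs_le_between in HA; apply Rabs_le_between in HU. nra. }
  pose proof (exp_pos (3 * sigma * B)) as HE. fold (E B) in HE.
  assert (Hk : kap r rho sigma nu eta gamma alpha Ap B = r * rho * E B + (1 - r) * rho * E B + eta + rho + nu * gamma * (1 + 2 * B / Ap) + alpha * B / Ap) by reflexivity.
  pose proof (mn_le0 M); pose proof (mn_le0 A); pose proof (mn_le0 U).
  assert (Hrr : 0 <= r * rho * E B) by (apply Rmult_le_pos; nra).
  assert (Hrr' : 0 <= (1 - r) * rho * E B) by (apply Rmult_le_pos; nra).
  assert (Hng : 0 <= nu * gamma * (2 * B / Ap)) by (apply Rmult_le_pos; lra).
  assert (Hpos : 0 < Ap + A) by lra.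
  unfold F, main_field, c1, c2, c3; simpl.
  set (e := exp (- sigma * (M + A + U))) in *.
  split; [|split]; intros Hneg.
  - apply (combine_k _ 0 0 (r * rho * E B)); try lra.
    pose proof (mul_lower_U (r * rho) U e (E B) ltac:(nra) He).
    pose proof (g_bounds Ap A HAp) as _.
    assert (0 < Ap / (Ap + A)) by (apply Rdiv_lt_0_compat; lra).
    assert (0 <= alpha * (Ap / (Ap + A))) by (apply Rmult_le_pos; lra).
    assert (alpha * (Ap / (Ap + A)) * M <= 0) by nra. assert (mu * M < 0) by nra. lra.
  - apply (combine_k _ 0 (nu * gamma * (2 * B / Ap)) ((1 - r) * rho * E B + eta)); try lra.
    pose proof (mul_lower_U ((1 - r) * rho) U e (E B) ltac:(nra) He).
    rewrite hA_eq by lra.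
    pose proof (Mw_lower M A B HM HA HA2).
    assert (eta * U >= eta * mn U).
    { destruct (Rlt_le_dec U 0). rewrite mn_neg; lra. rewrite mn_pos by lra. nra. }
    assert (- (nu * gamma * M * (1 - Ap / (Ap + A))) >= nu * gamma * (2 * B / Ap) * mn A).
    { pose proof (w_neg Ap A HAp Hneg HA2) as [W1 W2]. rewrite (mn_neg A) by auto.
      apply Rabs_le_between in HM.
      assert (- (M * (1 - Ap / (Ap + A))) >= B * (2 * A / Ap)).
      { destruct (Rlt_le_dec M 0).
        - assert (M * (1 - Ap / (Ap + A)) <= - B * (2 * A / Ap)) by nra. lra.
        - assert (2 * A / Ap <= 0). { unfold Rdiv. assert (0 < / Ap) by (apply Rinv_0_lt_compat; lra). nra. } nra. }
      replace (nu * gamma * (2 * B / Ap) * A) with (nu * gamma * (B * (2 * A / Ap))) by (field; lra).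
      replace (- (nu * gamma * M * (1 - Ap / (Ap + A)))) with (nu * gamma * (- (M * (1 - Ap / (Ap + A))))) by ring.
      nra. }
    nra.
  - apply (combine_k _ (nu * gamma) (nu * gamma * (2 * B / Ap)) 0); try lra.
    rewrite hA_eq by lra.
    pose proof (Mw_lower M A B HM HA HA2).
    assert (- eta * U - delta * U >= 0) by nra.
    assert (nu * gamma * M * (1 - Ap / (Ap + A)) >= nu * gamma * (1 * mn M + 2 * B / Ap * mn A)).
    { rewrite Rmult_assoc. apply Rle_ge. apply Rmult_le_compat_l; lra. }
    nra.
Qed.

End F.

Section G.
Variables (r rho sigma mu delta nu eta gamma alpha Ap : R).
Hypotheses (Hr : 0 < r < 1) (Hrho : 0 < rho) (Hsigma : 0 < sigma) (Hmu : 0 < mu)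
  (Hdelta : 0 < delta) (Hnu : 0 < nu) (Heta : 0 < eta) (Hgamma : 1 <= gamma)
  (Halpha : 0 <= alpha <= 1) (HAp : 0 < Ap).

Lemma aux_ineq (M A U B : R) : 0 <= B -> Rabs M <= B -> Rabs A <= B -> Rabs U <= B -> - Ap / 2 < A ->
  let F := aux_field r rho sigma mu delta nu eta gamma alpha Ap (M, A, U) in
  (M < 0 -> c1 F >= kap r rho sigma nu eta gamma alpha Ap B * (mn M + mn A + mn U)) /\
  (A < 0 -> c2 F >= kap r rho sigma nu eta gamma alpha Ap B * (mn M + mn A + mn U)) /\
  (U < 0 -> c3 F >= kap r rho sigma nu eta gamma alpha Ap B * (mn M + mn A + mn U)).
Proof.
  intros HB HM HA HU HA2 F.
  pose proof (B_facts nu gamma alpha Ap Hnu Hgamma Halpha HAp B HB) as [B1 [B2 [B3 B4]]].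
  set (EB := exp (3 * sigma * B)).
  assert (He : 0 < exp (- sigma * M) <= EB).
  { split. apply exp_pos. unfold EB. apply exp_mono.
    apply Rabs_le_between in HM. nra. }
  pose proof (exp_pos (3 * sigma * B)) as HE. fold EB in HE.
  assert (Hk : kap r rho sigma nu eta gamma alpha Ap B = r * rho * EB + (1 - r) * rho * EB + eta + rho + nu * gamma * (1 + 2 * B / Ap) + alpha * B / Ap) by reflexivity.
  pose proof (mn_le0 M); pose proof (mn_le0 A); pose proof (mn_le0 U).
  assert (Hrr : 0 <= r * rho * EB) by (apply Rmult_le_pos; nra).
  assert (Hrr' : 0 <= (1 - r) * rho * EB) by (apply Rmult_le_pos; nra).
  assert (Hng : 0 <= nu * gamma * (2 * B / Ap)) by (apply Rmult_le_pos; lra).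
  assert (Hpos : 0 < Ap + A) by lra.
  unfold F, aux_field, c1, c2, c3; simpl.
  set (e := exp (- sigma * M)) in *.
  split; [|split]; intros Hneg.
  - apply (combine_k _ 0 0 (r * rho * EB)); try lra.
    pose proof (mul_lower_U (r * rho) U e EB ltac:(nra) He).
    assert (0 < Ap / (Ap + A)) by (apply Rdiv_lt_0_compat; lra).
    assert (0 <= alpha * (Ap / (Ap + A))) by (apply Rmult_le_pos; lra).
    assert (alpha * (Ap / (Ap + A)) * M <= 0) by nra. assert (mu * M < 0) by nra. lra.
  - apply (combine_k _ 0 0 ((1 - r) * rho + eta)); try lra.
    { split. nra. rewrite Hk. assert ((1 - r) * rho <= rho) by nra.
      assert (0 <= nu * gamma * (1 + 2 * B / Ap)) by (apply Rmult_le_pos; lra). lra. }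
    assert (((1 - r) * rho + eta) * U >= ((1 - r) * rho + eta) * mn U).
    { apply Rle_ge, Rmult_le_compat_l. nra.
      destruct (Rlt_le_dec U 0). rewrite mn_neg; lra. rewrite mn_pos by lra. lra. }
    assert (delta * A < 0) by nra. lra.
  - apply (combine_k _ (nu * gamma) (nu * gamma * (2 * B / Ap)) 0); try lra.
    rewrite hA_eq by lra.
    pose proof (Mw_lower Ap HAp M A B HM HA HA2).
    assert (- (eta + delta) * U >= 0) by nra.
    assert (nu * gamma * M * (1 - Ap / (Ap + A)) >= nu * gamma * (1 * mn M + 2 * B / Ap * mn A)).
    { rewrite Rmult_assoc. apply Rle_ge. apply Rmult_le_compat_l; lra. }
    nra.
Qed.

Lemma comp_ineq (Mx Ax Ux My Ay Uy B : R) : 0 <= B ->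
  0 <= Mx <= B -> 0 <= Ax <= B -> 0 <= Ux <= B ->
  0 <= My <= B -> 0 <= Ay <= B -> 0 <= Uy <= B ->
  let Fx := main_field r rho sigma mu delta nu eta gamma alpha Ap (Mx, Ax, Ux) in
  let Gy := aux_field r rho sigma mu delta nu eta gamma alpha Ap (My, Ay, Uy) in
  let k := kap r rho sigma nu eta gamma alpha Ap B in
  let s := mn (My - Mx) + mn (Ay - Ax) + mn (Uy - Ux) in
  (My - Mx < 0 -> c1 Gy - c1 Fx >= k * s) /\
  (Ay - Ax < 0 -> c2 Gy - c2 Fx >= k * s) /\
  (Uy - Ux < 0 -> c3 Gy - c3 Fx >= k * s).
Proof.
  intros HB HMx HAx HUx HMy HAy HUy Fx Gy k s.
  pose proof (B_facts nu gamma alpha Ap Hnu Hgamma Halpha HAp B HB) as [B1 [B2 [B3 B4]]].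
  set (EB := exp (3 * sigma * B)).
  pose proof (exp_pos (3 * sigma * B)) as HE. fold EB in HE.
  assert (EB1 : 1 <= EB) by (unfold EB; rewrite <- exp_0; apply exp_mono; nra).
  assert (Hk : k = r * rho * EB + (1 - r) * rho * EB + eta + rho + nu * gamma * (1 + 2 * B / Ap) + alpha * B / Ap) by reflexivity.
  pose proof (mn_le0 (My - Mx)); pose proof (mn_le0 (Ay - Ax)); pose proof (mn_le0 (Uy - Ux)).
  assert (Hrr : 0 <= r * rho * EB) by (apply Rmult_le_pos; nra).
  assert (Hrr' : 0 <= (1 - r) * rho * EB) by (apply Rmult_le_pos; nra).
  assert (Hng : 0 <= nu * gamma * (B / Ap)) by (apply Rmult_le_pos; lra).
  assert (Hbb : B / Ap <= 2 * B / Ap) by (unfold Rdiv in *; lra).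
  pose proof (g_diff Ap Ax Ay HAp ltac:(lra) ltac:(lra)) as Gd.
  pose proof (g_bounds Ap Ax HAp ltac:(lra)) as Gx.
  pose proof (g_bounds Ap Ay HAp ltac:(lra)) as Gy'.
  assert (HU3 : Uy - Ux >= mn (Uy - Ux)).
  { destruct (Rlt_le_dec (Uy - Ux) 0). rewrite mn_neg; lra. rewrite mn_pos by lra. lra. }
  assert (Hex : 0 < exp (- sigma * (Mx + Ax + Ux)) <= 1) by (split; [apply exp_pos| apply exp_le1; nra]).
  unfold Fx, Gy, main_field, aux_field, c1, c2, c3, s, k; simpl. fold k.
  split; [|split]; intros Hneg.
  - apply (combine_k _ 0 (alpha * B / Ap) (r * rho)); try lra.
    { split. nra. rewrite Hk. assert (r * rho <= r * rho * EB) by nra. lra. }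
    assert (Hey : exp (- sigma * (Mx + Ax + Ux)) <= exp (- sigma * My) <= 1)
      by (split; apply exp_mono || apply exp_le1; nra).
    set (ey := exp (- sigma * My)) in *. set (ex := exp (- sigma * (Mx + Ax + Ux))) in *.
    assert (T1 : Uy * ey - Ux * ex >= mn (Uy - Ux)).
    { assert (Ux * (ey - ex) >= 0) by nra.
      destruct (Rlt_le_dec (Uy - Ux) 0). rewrite mn_neg by lra. nra. rewrite mn_pos by lra. nra. }
    set (gx := Ap / (Ap + Ax)) in *. set (gy := Ap / (Ap + Ay)) in *.
    assert (T2 : gx * Mx - gy * My >= B * mn (Ay - Ax) / Ap).
    { assert (gx * Mx - gy * My = gx * (Mx - My) + My * (gx - gy)) by ring.
      assert (gx * (Mx - My) >= 0) by nra.
      set (q := mn (Ay - Ax) / Ap) in *.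
      assert (q <= 0). { unfold q, Rdiv. assert (0 < / Ap) by (apply Rinv_0_lt_compat; lra). nra. }
      assert (My * (gx - gy) >= My * q) by nra.
      assert (My * q >= B * q) by nra.
      replace (B * mn (Ay - Ax) / Ap) with (B * q) by (unfold q; field; lra). lra. }
    assert (T3 : alpha * (gx * Mx - gy * My) >= alpha * B / Ap * mn (Ay - Ax)).
    { replace (alpha * B / Ap * mn (Ay - Ax)) with (alpha * (B * mn (Ay - Ax) / Ap)) by (field; lra).
      apply Rle_ge, Rmult_le_compat_l; lra. }
    assert (T4 : r * rho * (Uy * ey - Ux * ex) >= r * rho * mn (Uy - Ux)).
    { apply Rle_ge, Rmult_le_compat_l; nra. }
    assert (mu * (Mx - My) >= 0) by nra.
    nra.
  - apply (combine_k _ 0 0 ((1 - r) * rho + eta)); try lra.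
    { split. nra. rewrite Hk. assert ((1 - r) * rho <= rho) by nra.
      assert (0 <= nu * gamma * (1 + 2 * B / Ap)) by (apply Rmult_le_pos; lra). lra. }
    set (ex := exp (- sigma * (Mx + Ax + Ux))) in *.
    assert (Uy - Ux * ex >= Uy - Ux) by nra.
    rewrite hA_eq by lra.
    assert (0 <= nu * gamma * Mx * (1 - Ap / (Ap + Ax))).
    { apply Rmult_le_pos. nra. lra. }
    assert ((1 - r) * rho * (Uy - Ux * ex) >= (1 - r) * rho * mn (Uy - Ux)).
    { apply Rle_ge, Rmult_le_compat_l; nra. }
    assert (delta * (Ay - Ax) < 0) by nra.
    assert (eta * (Uy - Ux) >= eta * mn (Uy - Ux)) by nra.
    nra.
  - assert (nu * gamma * (B / Ap) <= nu * gamma * (2 * B / Ap)) by nra.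
    assert (nu * gamma * (1 + 2 * B / Ap) = nu * gamma + nu * gamma * (2 * B / Ap)) by ring.
    assert (nu * gamma * (B / Ap) <= k) by (rewrite Hk; nra).
    apply (combine_k _ (nu * gamma) (nu * gamma * (B / Ap)) 0); try lra.
    rewrite !hA_eq by lra.
    set (gx := Ap / (Ap + Ax)) in *. set (gy := Ap / (Ap + Ay)) in *.
    assert (T1 : (My - Mx) * (1 - gy) >= mn (My - Mx)).
    { destruct (Rlt_le_dec (My - Mx) 0). rewrite mn_neg by lra. nra. rewrite mn_pos by lra. nra. }
    assert (T2 : Mx * (gx - gy) >= B / Ap * mn (Ay - Ax)).
    { set (q := mn (Ay - Ax) / Ap) in *.
      assert (q <= 0). { unfold q, Rdiv. assert (0 < / Ap) by (apply Rinv_0_lt_compat; lra). nra. }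
      assert (Mx * (gx - gy) >= Mx * q) by nra.
      assert (Mx * q >= B * q) by nra.
      replace (B / Ap * mn (Ay - Ax)) with (B * q) by (unfold q; field; lra). lra. }
    assert (E1 : My * (1 - gy) - Mx * (1 - gx) = (My - Mx) * (1 - gy) + Mx * (gx - gy)) by ring.
    assert (T3 : nu * gamma * (My * (1 - gy) - Mx * (1 - gx)) >= nu * gamma * (mn (My - Mx) + B / Ap * mn (Ay - Ax))).
    { apply Rle_ge, Rmult_le_compat_l; lra. }
    assert ((eta + delta) * (Uy - Ux) < 0) by nra.
    nra.
Qed.

End G.

Lemma exR (f : R -> R) a b : (forall t, continuity_pt f t) -> ex_RInt f a b.
Proof.
  intros H. apply (ex_RInt_continuous (V:=R_CompleteNormedModule)). intros z _.
  assert (Hc : continuity_pt f z) by auto. apply continuity_pt_filterlim in Hc. exact Hc.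
Qed.

Lemma RInt_lip (f : R -> R) K s t : (forall t, continuity_pt f t) -> (forall t, Rabs (f t) <= K) ->
  Rabs (RInt f 0 t - RInt f 0 s) <= K * Rabs (t - s).
Proof.
  intros Hc HK.
  assert (Hch : RInt f 0 s + RInt f s t = RInt f 0 t).
  { apply (RInt_Chasles (V:=R_CompleteNormedModule)); apply exR; auto. }
  assert (Hg : forall x y z : R, x + y = z -> z - x = y) by (intros; lra).
  apply Hg in Hch. rewrite Hch.
  destruct (Rle_dec s t).
  - rewrite (Rabs_right (t - s)) by lra. rewrite Rmult_comm. apply abs_RInt_le_const; auto. apply exR; auto.
  - assert (Hsw : - RInt f t s = RInt f s t).
    { apply (opp_RInt_swap (V:=R_CompleteNormedModule)). apply exR; auto. }
    rewrite <- Hsw. rewrite Rabs_Ropp.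
    rewrite (Rabs_left (t - s)) by lra. replace (- (t - s)) with (s - t) by ring. rewrite Rmult_comm.
    apply abs_RInt_le_const; auto. lra. apply exR; auto.
Qed.

Lemma RInt_minusR (f g : R -> R) a b : (forall t, continuity_pt f t) -> (forall t, continuity_pt g t) ->
  RInt (fun s => f s - g s) a b = RInt f a b - RInt g a b.
Proof.
  intros Hf Hg. apply (RInt_minus f g a b); apply exR; auto.
Qed.

Lemma RInt_abs_le (f h : R -> R) a b : a <= b -> (forall t, continuity_pt f t) -> (forall t, continuity_pt h t) ->
  (forall x, a < x < b -> Rabs (f x) <= h x) -> Rabs (RInt f a b) <= RInt h a b.
Proof.
  intros Hab Hf Hh Hb. apply Rabs_le. split.
  - assert (RInt (fun s => - h s) a b <= RInt f a b).
    { apply RInt_le; auto. apply exR. intros t; apply continuity_pt_opp; auto. apply exR; auto.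
      intros x Hx. specialize (Hb x Hx). apply Rabs_le_between in Hb. lra. }
    assert (RInt (fun s => - h s) a b = - RInt h a b).
    { apply (RInt_opp (V:=R_CompleteNormedModule) h a b). apply exR; auto. }
    lra.
  - apply RInt_le; auto; try (apply exR; auto). intros x Hx. specialize (Hb x Hx). apply Rabs_le_between in Hb. lra.
Qed.

Lemma RInt_exp a t : 0 < a -> RInt (fun s => exp (a * s)) 0 t = (exp (a * t) - 1) / a.
Proof.
  intros Ha. apply is_RInt_unique.
  replace ((exp (a * t) - 1) / a) with (minus (exp (a * t) / a) (exp (a * 0) / a)).
  2:{ rewrite Rmult_0_r, exp_0. unfold minus, plus, opp; simpl. field. lra. }
  apply (is_RInt_derive (fun s => exp (a * s) / a)).
  - intros x _. auto_derive; auto. field. lra.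
  - intros x _. apply continuity_pt_filterlim.
    apply (continuity_pt_comp (fun s => a * s) exp).
    apply continuity_pt_mult. apply continuity_pt_const. intros u v; auto. apply continuity_pt_id.
    apply derivable_continuous_pt, derivable_pt_exp.
Qed.

Definition ci (i : nat) (v : vec3) : R := match i with O => c1 v | 1%nat => c2 v | _ => c3 v end.
Definition n1 (a b : vec3) : R := Rabs (c1 a - c1 b) + Rabs (c2 a - c2 b) + Rabs (c3 a - c3 b).

Lemma ci_le_n1 i a b : Rabs (ci i a - ci i b) <= n1 a b.
Proof.
  unfold n1. pose proof (Rabs_pos (c1 a - c1 b)); pose proof (Rabs_pos (c2 a - c2 b)); pose proof (Rabs_pos (c3 a - c3 b)).
  destruct i as [|[|]]; simpl; lra.
Qed.

Lemma le_geom (x y C : R) : 0 <= C -> (forall n : nat, x <= y + C * (1/2) ^ n) -> x <= y.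
Proof.
  intros HC H. destruct (Rle_dec x y) as [|Hn]; auto. exfalso.
  assert (Hd : 0 < (x - y) / (C + 1)) by (apply Rdiv_lt_0_compat; lra).
  destruct (pow_lt_1_zero (1/2) ltac:(rewrite Rabs_right; lra) _ Hd) as [N HN].
  specialize (HN N (le_n N)). specialize (H N).
  rewrite Rabs_right in HN by (apply Rle_ge, pow_le; lra).
  assert (0 <= (1/2)^N) by (apply pow_le; lra).
  assert (C * (1/2)^N <= (C + 1) * (1/2)^N) by nra.
  assert ((C+1) * (1/2)^N < x - y).
  { apply Rmult_lt_reg_l with (/ (C+1)). apply Rinv_0_lt_compat; lra.
    rewrite <- Rmult_assoc, Rinv_l, Rmult_1_l by lra. unfold Rdiv in Hd. lra. }
  lra.
Qed.

Section Picard.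
Variable Fv : vec3 -> vec3.
Variables L K : R.
Hypothesis HL0 : 0 < L.
Hypothesis HK0 : 0 <= K.
Hypothesis HL : forall i a b, Rabs (ci i (Fv a) - ci i (Fv b)) <= L * n1 a b.
Hypothesis HK : forall i a, Rabs (ci i (Fv a)) <= K.
Variable X0 : vec3.

Fixpoint pic (n : nat) : R -> vec3 :=
  match n with
  | O => fun _ => X0
  | S n => fun t => (c1 X0 + RInt (fun s => c1 (Fv (pic n s))) 0 t,
                     c2 X0 + RInt (fun s => c2 (Fv (pic n s))) 0 t,
                     c3 X0 + RInt (fun s => c3 (Fv (pic n s))) 0 t)
  end.

Lemma pic_S i n t : ci i (pic (S n) t) = ci i X0 + RInt (fun s => ci i (Fv (pic n s))) 0 t.
Proof. destruct i as [|[|]]; reflexivity. Qed.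

Lemma n1_sum a b : n1 a b = Rabs (ci 0 a - ci 0 b) + Rabs (ci 1 a - ci 1 b) + Rabs (ci 2 a - ci 2 b).
Proof. reflexivity. Qed.

Lemma lip_comp (g : R -> vec3) C :
  (forall i s t, Rabs (ci i (g t) - ci i (g s)) <= C * Rabs (t - s)) ->
  forall i t, continuity_pt (fun s => ci i (Fv (g s))) t.
Proof.
  intros Hg i. apply cont_lip with (L * (3 * C)). intros s t.
  eapply Rle_trans. apply HL. rewrite n1_sum.
  assert (Rabs (t - s) >= 0) by (apply Rle_ge, Rabs_pos).
  pose proof (Hg 0%nat s t); pose proof (Hg 1%nat s t); pose proof (Hg 2%nat s t). nra.
Qed.

Lemma pic_lip n : forall i s t, Rabs (ci i (pic n t) - ci i (pic n s)) <= K * Rabs (t - s).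
Proof.
  induction n; intros i s t.
  - simpl. rewrite Rminus_eq_0, Rabs_R0. apply Rmult_le_pos; auto; apply Rabs_pos.
  - rewrite !pic_S. replace (ci i X0 + RInt (fun s0 => ci i (Fv (pic n s0))) 0 t -
      (ci i X0 + RInt (fun s0 => ci i (Fv (pic n s0))) 0 s)) with
      (RInt (fun s0 => ci i (Fv (pic n s0))) 0 t - RInt (fun s0 => ci i (Fv (pic n s0))) 0 s) by ring.
    apply RInt_lip. apply (lip_comp _ K IHn). intros; apply HK.
Qed.

Lemma pic_cont n i t : continuity_pt (fun s => ci i (Fv (pic n s))) t.
Proof. apply (lip_comp _ K (pic_lip n)). Qed.

Definition a := 6 * L.
Definition C0 := 3 * K / a.
Definition q := 1 / 2.

Lemma a_pos : 0 < a. Proof. unfold a; lra. Qed.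
Lemma C0_pos : 0 <= C0. Proof. unfold C0. pose proof a_pos. unfold Rdiv. apply Rmult_le_pos. lra. left; apply Rinv_0_lt_compat; auto. Qed.

Lemma pic_contr n : forall t, 0 <= t -> n1 (pic (S n) t) (pic n t) <= C0 * q ^ n * exp (a * t).
Proof.
  pose proof a_pos as Ha. pose proof C0_pos as HC.
  induction n; intros t Ht.
  - rewrite n1_sum. rewrite !pic_S. simpl ((pic 0) t).
    assert (Hb : forall i, Rabs (ci i X0 + RInt (fun s => ci i (Fv X0)) 0 t - ci i X0) <= K * t).
    { intros i. replace (ci i X0 + RInt (fun s => ci i (Fv X0)) 0 t - ci i X0) with (RInt (fun s => ci i (Fv X0)) 0 t) by lra.
      rewrite Rmult_comm. replace t with (t - 0) at 2 by ring. apply abs_RInt_le_const. lra. apply exR. intros; apply continuity_pt_const; intros u v; reflexivity.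
      intros; apply HK. }
    pose proof (Hb 0%nat); pose proof (Hb 1%nat); pose proof (Hb 2%nat). simpl pic in *.
    assert (a * t <= exp (a * t)) by (pose proof (exp_ineq1_le (a * t)); lra).
    assert (3 * K * t <= C0 * exp (a * t)).
    { unfold C0. replace (3 * K / a * exp (a * t)) with (3 * K * (exp (a * t) / a)) by (field; lra).
      apply Rmult_le_compat_l. lra. apply Rmult_le_reg_r with a; auto. unfold Rdiv. rewrite Rmult_assoc, Rinv_l; lra. }
    rewrite pow_O, Rmult_1_r. lra.
  - rewrite n1_sum.
    assert (Hb : forall i, Rabs (ci i (pic (S (S n)) t) - ci i (pic (S n) t)) <= L * C0 * q ^ n * (exp (a * t) / a)).
    { intros i. rewrite !pic_S.
      replace (ci i X0 + RInt (fun s => ci i (Fv (pic (S n) s))) 0 t - (ci i X0 + RInt (fun s => ci i (Fv (pic n s))) 0 t))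
        with (RInt (fun s => ci i (Fv (pic (S n) s)) - ci i (Fv (pic n s))) 0 t)
        by (rewrite RInt_minusR; [lra| apply pic_cont | apply pic_cont]).
      eapply Rle_trans.
      apply (RInt_abs_le _ (fun s => L * C0 * q ^ n * exp (a * s))); auto.
      { intros; apply continuity_pt_minus; apply pic_cont. }
      { intros u. apply continuity_pt_mult. apply continuity_pt_const; intros v w; auto.
        apply (continuity_pt_comp (fun s => a * s) exp).
        apply continuity_pt_mult. apply continuity_pt_const. intros v w; auto. apply continuity_pt_id.
        apply derivable_continuous_pt, derivable_pt_exp. }
      { intros x Hx. eapply Rle_trans. apply HL. replace (L * C0 * q ^ n * exp (a * x)) with (L * (C0 * q ^ n * exp (a * x))) by ring. apply Rmult_le_compat_l. lra. apply IHn. lra. }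
      assert (Hi : RInt (fun s => L * C0 * q ^ n * exp (a * s)) 0 t = L * C0 * q ^ n * RInt (fun s => exp (a * s)) 0 t).
      { apply (RInt_scal (V:=R_CompleteNormedModule) (fun s => exp (a * s)) 0 t (L * C0 * q ^ n)).
        apply exR. intros u. apply (continuity_pt_comp (fun s => a * s) exp).
        apply continuity_pt_mult. apply continuity_pt_const. intros v w; auto. apply continuity_pt_id.
        apply derivable_continuous_pt, derivable_pt_exp. }
      rewrite Hi, RInt_exp by auto.
      assert (0 <= L * C0 * q ^ n). { apply Rmult_le_pos. nra. apply pow_le. unfold q; lra. }
      apply Rmult_le_compat_l; auto. unfold Rdiv. apply Rmult_le_compat_r. left; apply Rinv_0_lt_compat; auto. lra. }
    pose proof (Hb 0%nat); pose proof (Hb 1%nat); pose proof (Hb 2%nat).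
    assert (E : 3 * (L * C0 * q ^ n * (exp (a * t) / a)) = C0 * q ^ S n * exp (a * t)).
    { unfold a, q. simpl. field. lra. }
    lra.
Qed.

Lemma pic_cauchy n k t : 0 <= t -> forall i, Rabs (ci i (pic (n + k) t) - ci i (pic n t)) <= 2 * C0 * q ^ n * exp (a * t) * (1 - q ^ k).
Proof.
  intros Ht i. pose proof C0_pos. pose proof (exp_pos (a * t)).
  induction k.
  - rewrite Nat.add_0_r, Rminus_eq_0, Rabs_R0. simpl. lra.
  - replace (n + S k)%nat with (S (n + k)) by lia.
    assert (H1 : Rabs (ci i (pic (S (n + k)) t) - ci i (pic (n + k) t)) <= C0 * q ^ (n + k) * exp (a * t)).
    { eapply Rle_trans. apply ci_le_n1. apply pic_contr; auto. }
    assert (Ht3 : Rabs (ci i (pic (S (n + k)) t) - ci i (pic n t)) <= Rabs (ci i (pic (S (n + k)) t) - ci i (pic (n + k) t)) + Rabs (ci i (pic (n + k) t) - ci i (pic n t))).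
    { replace (ci i (pic (S (n + k)) t) - ci i (pic n t)) with ((ci i (pic (S (n + k)) t) - ci i (pic (n + k) t)) + (ci i (pic (n + k) t) - ci i (pic n t))) by ring. apply Rabs_triang. }
    rewrite pow_add in H1. simpl pow. unfold q in *.
    assert (0 <= C0 * (1/2) ^ n * exp (a * t)). { apply Rmult_le_pos; [apply Rmult_le_pos|]; try lra. apply pow_le; lra. }
    set (P := (1/2)^k) in *. set (Q := (1/2)^n) in *. set (X := exp (a * t)) in *.
    assert (C0 * (Q * P) * X = (C0 * Q * X) * P) by ring.
    assert (2 * C0 * Q * X * (1 - (1/2) * P) = 2 * C0 * Q * X * (1 - P) + (C0 * Q * X) * P) by field.
    lra.
Qed.

Lemma pic_cauchy' n m t i : 0 <= t -> (n <= m)%nat -> Rabs (ci i (pic m t) - ci i (pic n t)) <= 2 * C0 * q ^ n * exp (a * t).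
Proof.
  intros Ht Hnm. replace m with (n + (m - n))%nat by lia.
  eapply Rle_trans. apply pic_cauchy; auto.
  assert (0 <= 2 * C0 * q ^ n * exp (a * t)).
  { pose proof C0_pos. apply Rmult_le_pos; [apply Rmult_le_pos|]; try lra. apply pow_le; unfold q; lra. left; apply exp_pos. }
  assert (0 <= q ^ (m - n)) by (apply pow_le; unfold q; lra). nra.
Qed.

Definition xl (i : nat) (t : R) : R := Lim_seq (fun n => ci i (pic n (Rmax t 0))).

Lemma xl_lim i t : is_lim_seq (fun n => ci i (pic n (Rmax t 0))) (xl i t).
Proof.
  unfold xl. apply Lim_seq_correct'. apply ex_lim_seq_cauchy_corr.
  intros eps. set (T := Rmax t 0). assert (HT : 0 <= T) by apply Rmax_r.
  set (Bd := 2 * C0 * exp (a * T)).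
  assert (HB : 0 <= Bd) by (unfold Bd; pose proof C0_pos; pose proof (exp_pos (a * T)); nra).
  assert (Hd : 0 < eps / (2 * (Bd + 1))) by (apply Rdiv_lt_0_compat; [apply cond_pos| lra]).
  destruct (pow_lt_1_zero q ltac:(unfold q; rewrite Rabs_right; lra) _ Hd) as [N HN].
  exists N. intros n m Hn Hm.
  assert (Hq : forall k, (N <= k)%nat -> Bd * q ^ k < eps / 2).
  { intros k Hk. specialize (HN k Hk). rewrite Rabs_right in HN by (apply Rle_ge, pow_le; unfold q; lra).
    assert (0 <= q ^ k) by (apply pow_le; unfold q; lra).
    assert (Bd * q ^ k <= (Bd + 1) * q ^ k) by nra.
    assert ((Bd + 1) * q ^ k < eps / 2).
    { apply Rmult_lt_reg_l with (/ (Bd + 1)). apply Rinv_0_lt_compat; lra.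
      rewrite <- Rmult_assoc, Rinv_l, Rmult_1_l by lra.
      replace (/ (Bd + 1) * (eps / 2)) with (eps / (2 * (Bd + 1))) by (field; lra). auto. }
    lra. }
  destruct (Compare_dec.le_dec n m).
  - pose proof (pic_cauchy' n m T i HT l). specialize (Hq n Hn).
    replace (2 * C0 * q ^ n * exp (a * T)) with (Bd * q ^ n) in H by (unfold Bd; ring).
    rewrite Rabs_minus_sym. pose proof (cond_pos eps). lra.
  - pose proof (pic_cauchy' m n T i HT ltac:(lia)). specialize (Hq m Hm).
    replace (2 * C0 * q ^ m * exp (a * T)) with (Bd * q ^ m) in H by (unfold Bd; ring).
    pose proof (cond_pos eps). lra.
Qed.

Lemma lim_bound (u : nat -> R) (l v b : R) n : is_lim_seq u l -> (forall m, (n <= m)%nat -> Rabs (u m - v) <= b) -> Rabs (l - v) <= b.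
Proof.
  intros Hl Hb. destruct (Rle_dec (Rabs (l - v)) b) as [|Hn]; auto. exfalso.
  apply is_lim_seq_spec in Hl. unfold is_lim_seq' in Hl.
  assert (He : 0 < Rabs (l - v) - b) by lra.
  destruct (Hl (mkposreal _ He)) as [N HN]. simpl in HN.
  specialize (HN (max N n) ltac:(lia)). specialize (Hb (max N n) ltac:(lia)).
  pose proof (Rabs_triang (u (max N n) - v) (l - u (max N n))).
  replace (u (max N n) - v + (l - u (max N n))) with (l - v) in H by ring.
  rewrite Rabs_minus_sym in HN. lra.
Qed.

Lemma xl_bound i t n : 0 <= t -> Rabs (xl i t - ci i (pic n t)) <= 2 * C0 * q ^ n * exp (a * t).
Proof.
  intros Ht. pose proof (xl_lim i t) as Hl. rewrite Rmax_left in Hl by auto.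
  apply (lim_bound _ _ _ _ n Hl). intros m Hm. apply pic_cauchy'; auto.
Qed.

Lemma xl_max i t : xl i t = xl i (Rmax t 0).
Proof. unfold xl. rewrite (Rmax_left (Rmax t 0) 0) by apply Rmax_r. reflexivity. Qed.

Lemma Rmax_lip s t : Rabs (Rmax t 0 - Rmax s 0) <= Rabs (t - s).
Proof.
  unfold Rmax. destruct (Rle_dec t 0), (Rle_dec s 0); apply Rabs_le;
  pose proof (Rle_abs (t - s)); pose proof (Rle_abs (-(t - s))); rewrite Rabs_Ropp in *; lra.
Qed.

Lemma xl_lip i s t : Rabs (xl i t - xl i s) <= K * Rabs (t - s).
Proof.
  rewrite (xl_max i t), (xl_max i s).
  set (t' := Rmax t 0). set (s' := Rmax s 0).
  assert (Ht : 0 <= t') by apply Rmax_r. assert (Hs : 0 <= s') by apply Rmax_r.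
  assert (Hts : K * Rabs (t' - s') <= K * Rabs (t - s)) by (apply Rmult_le_compat_l; auto; apply Rmax_lip).
  apply Rle_trans with (K * Rabs (t' - s')); auto.
  apply (le_geom _ _ (2 * C0 * exp (a * t') + 2 * C0 * exp (a * s'))).
  { pose proof C0_pos. pose proof (exp_pos (a * t')). pose proof (exp_pos (a * s')). nra. }
  intros n.
  pose proof (xl_bound i t' n Ht). pose proof (xl_bound i s' n Hs). pose proof (pic_lip n i s' t').
  pose proof (Rabs_triang (xl i t' - ci i (pic n t')) (ci i (pic n t') - ci i (pic n s'))).
  pose proof (Rabs_triang (xl i t' - ci i (pic n t') + (ci i (pic n t') - ci i (pic n s'))) (ci i (pic n s') - xl i s')).
  replace (xl i t' - ci i (pic n t') + (ci i (pic n t') - ci i (pic n s')) + (ci i (pic n s') - xl i s')) with (xl i t' - xl i s') in H3 by ring.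
  rewrite (Rabs_minus_sym (ci i (pic n s'))) in H3.
  assert (E : (2 * C0 * exp (a * t') + 2 * C0 * exp (a * s')) * (1/2)^n = 2 * C0 * q ^ n * exp (a * t') + 2 * C0 * q ^ n * exp (a * s')) by (unfold q; ring).
  lra.
Qed.

Definition sol (t : R) : vec3 := (xl 0 t, xl 1 t, xl 2 t).

Lemma ci_sol i t : ci i (sol t) = xl (min i 2) t.
Proof. destruct i as [|[|[|]]]; reflexivity. Qed.

Lemma sol_lip i s t : Rabs (ci i (sol t) - ci i (sol s)) <= K * Rabs (t - s).
Proof. rewrite !ci_sol. apply xl_lip. Qed.

Lemma sol_bound i t n : 0 <= t -> Rabs (ci i (sol t) - ci i (pic n t)) <= 2 * C0 * q ^ n * exp (a * t).
Proof.
  intros Ht. rewrite ci_sol. eapply Rle_trans. 2: apply (xl_bound (min i 2) t n Ht).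
  destruct i as [|[|[|]]]; simpl; lra.
Qed.

Lemma sol_cont i t : continuity_pt (fun s => ci i (Fv (sol s))) t.
Proof. apply (lip_comp sol K sol_lip). Qed.

Lemma sol_int i t : 0 <= t -> ci i (sol t) = ci i X0 + RInt (fun s => ci i (Fv (sol s))) 0 t.
Proof.
  intros Ht.
  set (I := RInt (fun s => ci i (Fv (sol s))) 0 t).
  assert (H : forall n, Rabs (ci i (sol t) - (ci i X0 + I)) <= 0 + (4 * C0 * exp (a * t) + 6 * t * L * C0 * exp (a * t)) * (1/2) ^ n).
  { intros n. rewrite Rplus_0_l.
    pose proof (sol_bound i t (S n) Ht) as B1.
    rewrite pic_S in B1.
    assert (B2 : Rabs (RInt (fun s => ci i (Fv (pic n s))) 0 t - I) <= t * (L * (6 * C0 * q ^ n * exp (a * t)))).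
    { unfold I. rewrite <- RInt_minusR by (intros; apply pic_cont || apply sol_cont).
      replace (t * (L * (6 * C0 * q ^ n * exp (a * t)))) with ((t - 0) * (L * (6 * C0 * q ^ n * exp (a * t)))) by ring.
      apply abs_RInt_le_const. lra.
      apply exR. intros; apply continuity_pt_minus; [apply pic_cont| apply sol_cont].
      intros s Hs. eapply Rle_trans. apply HL. apply Rmult_le_compat_l. lra.
      rewrite n1_sum.
      assert (Hx : forall j, Rabs (ci j (pic n s) - ci j (sol s)) <= 2 * C0 * q ^ n * exp (a * t)).
      { intros j. rewrite Rabs_minus_sym. eapply Rle_trans. apply sol_bound; lra.
        apply Rmult_le_compat_l. pose proof C0_pos. apply Rmult_le_pos. lra. apply pow_le; unfold q; lra.
        apply exp_mono. pose proof a_pos. nra. }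
      pose proof (Hx 0%nat); pose proof (Hx 1%nat); pose proof (Hx 2%nat). lra. }
    pose proof (Rabs_triang (ci i (sol t) - (ci i X0 + RInt (fun s => ci i (Fv (pic n s))) 0 t)) (RInt (fun s => ci i (Fv (pic n s))) 0 t - I)).
    assert (E1 : ci i (sol t) - (ci i X0 + RInt (fun s => ci i (Fv (pic n s))) 0 t) + (RInt (fun s => ci i (Fv (pic n s))) 0 t - I) = ci i (sol t) - (ci i X0 + I)) by lra.
    rewrite E1 in H.
    assert (E2 : 2 * C0 * q ^ S n * exp (a * t) + t * (L * (6 * C0 * q ^ n * exp (a * t))) <= (4 * C0 * exp (a * t) + 6 * t * L * C0 * exp (a * t)) * (1 / 2) ^ n).
    { unfold q. simpl. pose proof C0_pos. pose proof (exp_pos (a * t)). assert (0 <= (1/2)^n) by (apply pow_le; lra).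
      assert (0 <= C0 * (1/2)^n * exp (a * t)) by (apply Rmult_le_pos; [apply Rmult_le_pos|]; lra).
      nra. }
    lra. }
  assert (Rabs (ci i (sol t) - (ci i X0 + I)) <= 0).
  { apply (le_geom _ _ (4 * C0 * exp (a * t) + 6 * t * L * C0 * exp (a * t))); auto.
    pose proof C0_pos. pose proof (exp_pos (a * t)). assert (0 <= t * L) by nra.
    assert (0 <= C0 * exp (a * t)) by nra. nra. }
  pose proof (Rabs_pos (ci i (sol t) - (ci i X0 + I))).
  assert (Rabs (ci i (sol t) - (ci i X0 + I)) = 0) by lra.
  apply Rabs_eq_0 in H2. lra.
Qed.

Lemma sol_deriv i t : 0 < t -> is_derive (fun s => ci i (sol s)) t (ci i (Fv (sol t))).
Proof.
  intros Ht.
  set (f := fun s => ci i (Fv (sol s))).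
  assert (H1 : is_derive (fun b => RInt f 0 b) t (f t)).
  { apply (is_derive_RInt (V:=R_CompleteNormedModule) f (fun b => RInt f 0 b) 0 t).
    - exists (mkposreal 1 Rlt_0_1). intros y _. apply RInt_correct. apply exR. apply sol_cont.
    - assert (Hc := sol_cont i t). apply continuity_pt_filterlim in Hc. exact Hc. }
  assert (H2 : is_derive (fun b => ci i X0 + RInt f 0 b) t (f t)).
  { pose proof (is_derive_plus (K:=R_AbsRing) (V:=R_NormedModule) (fun _ => ci i X0) (fun b => RInt f 0 b) t zero (f t)
      (is_derive_const (K:=R_AbsRing) (V:=R_NormedModule) _ _) H1) as H3.
    rewrite plus_zero_l in H3. exact H3. }
  apply is_derive_ext_loc with (fun b => ci i X0 + RInt f 0 b); auto.
  exists (mkposreal t Ht). intros y Hy. simpl.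
  unfold ball in Hy; simpl in Hy; unfold AbsRing_ball, abs, minus, plus, opp in Hy; simpl in Hy.
  apply Rabs_def2 in Hy. rewrite sol_int by lra. reflexivity.
Qed.

Lemma sol_0 : sol 0 = X0.
Proof.
  assert (H : forall i, ci i (sol 0) = ci i X0).
  { intros i. rewrite sol_int by lra. rewrite RInt_point. unfold zero; simpl. ring. }
  destruct X0 as [[x1 x2] x3]. pose proof (H 0%nat); pose proof (H 1%nat); pose proof (H 2%nat).
  unfold sol, ci, c1, c2, c3 in *. simpl in *. rewrite H0, H1, H2. reflexivity.
Qed.

Lemma sol_is_solution : is_solution Fv sol /\ sol 0 = X0.
Proof.
  split; [split|apply sol_0].
  - intros t Ht. split; [|split]; apply (sol_deriv 0%nat t Ht) || apply (sol_deriv 1%nat t Ht) || apply (sol_deriv 2%nat t Ht).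
  - intros eps Heps. exists (eps / (K + 1)). split. apply Rdiv_lt_0_compat; lra.
    intros t Ht.
    assert (Hb : forall i, Rabs (ci i (sol t) - ci i (sol 0)) < eps).
    { intros i. eapply Rle_lt_trans. apply sol_lip. rewrite Rminus_0_r, Rabs_right by lra.
      apply Rle_lt_trans with ((K + 1) * t). nra.
      apply Rmult_lt_reg_l with (/ (K + 1)). apply Rinv_0_lt_compat; lra.
      rewrite <- Rmult_assoc, Rinv_l, Rmult_1_l by lra. unfold Rdiv in Ht. lra. }
    split; [|split]; [apply (Hb 0%nat)|apply (Hb 1%nat)|apply (Hb 2%nat)].
Qed.

End Picard.

Lemma picard (Fv : vec3 -> vec3) (L K : R) (X0 : vec3) : 0 < L -> 0 <= K ->
  (forall i a b, Rabs (ci i (Fv a) - ci i (Fv b)) <= L * n1 a b) ->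
  (forall i a, Rabs (ci i (Fv a)) <= K) ->
  exists x, is_solution Fv x /\ x 0 = X0.
Proof.
  intros. exists (sol Fv X0). apply (sol_is_solution Fv L K); auto.
Qed.

Lemma exp_lip u v : u <= 0 -> v <= 0 -> Rabs (exp u - exp v) <= Rabs (u - v).
Proof.
  assert (Hw : forall u v, v <= u -> u <= 0 -> Rabs (exp u - exp v) <= Rabs (u - v)).
  { intros x y Hyx Hx. rewrite Rabs_right. rewrite Rabs_right by lra.
    replace (exp x - exp y) with (exp x * (1 - exp (y - x))).
    2:{ rewrite Rmult_minus_distr_l, Rmult_1_r, <- exp_plus. replace (x + (y - x)) with y by ring. ring. }
    pose proof (exp_ineq1_le (y - x)). pose proof (exp_le1 x Hx). pose proof (exp_pos x).
    assert (exp (y - x) <= 1) by (apply exp_le1; lra). nra.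
    apply Rle_ge. assert (exp y <= exp x) by (apply exp_mono; auto). lra. }
  intros Hu Hv. destruct (Rle_dec v u). apply Hw; auto.
  rewrite Rabs_minus_sym, (Rabs_minus_sym u). apply Hw; lra.
Qed.

Lemma prod_lip x y x' y' Bx By : Rabs x' <= Bx -> Rabs y <= By ->
  Rabs (x * y - x' * y') <= By * Rabs (x - x') + Bx * Rabs (y - y').
Proof.
  intros H1 H2.
  replace (x * y - x' * y') with ((x - x') * y + x' * (y - y')) by ring.
  eapply Rle_trans. apply Rabs_triang. rewrite !Rabs_mult.
  pose proof (Rabs_pos (x - x')). pose proof (Rabs_pos (y - y')). pose proof (Rabs_pos y). pose proof (Rabs_pos x').
  nra.
Qed.

Lemma g_lip Ap A A' : 0 < Ap -> 0 <= A -> 0 <= A' -> Rabs (Ap / (Ap + A) - Ap / (Ap + A')) <= / Ap * Rabs (A - A').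
Proof.
  intros HAp HA HA'.
  replace (Ap / (Ap + A) - Ap / (Ap + A')) with ((A' - A) * (Ap / ((Ap + A) * (Ap + A')))) by (field; lra).
  rewrite Rabs_mult, Rabs_minus_sym, Rmult_comm. apply Rmult_le_compat_r. apply Rabs_pos.
  rewrite Rabs_right. 2:{ apply Rle_ge, Rlt_le, Rdiv_lt_0_compat; nra. }
  assert (0 < (Ap + A) * (Ap + A')) by nra.
  apply Rmult_le_reg_r with (Ap * ((Ap + A) * (Ap + A'))). apply Rmult_lt_0_compat; lra.
  replace (Ap / ((Ap + A) * (Ap + A')) * (Ap * ((Ap + A) * (Ap + A')))) with (Ap * Ap) by (field; lra).
  replace (/ Ap * (Ap * ((Ap + A) * (Ap + A')))) with ((Ap + A) * (Ap + A')) by (field; lra). nra.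
Qed.

Definition cl (S v : R) : R := Rmin (Rmax v 0) S.
Definition clv (S : R) (X : vec3) : vec3 := (cl S (c1 X), cl S (c2 X), cl S (c3 X)).

Lemma cl_range S v : 0 <= S -> 0 <= cl S v <= S.
Proof. intros. unfold cl, Rmin, Rmax. destruct (Rle_dec v 0); destruct (Rle_dec _ S); lra. Qed.

Lemma cl_lip S v w : 0 <= S -> Rabs (cl S v - cl S w) <= Rabs (v - w).
Proof.
  intros. unfold cl, Rmin, Rmax. apply Rabs_le.
  pose proof (Rle_abs (v - w)); pose proof (Rle_abs (-(v - w))); rewrite Rabs_Ropp in *.
  destruct (Rle_dec v 0); destruct (Rle_dec w 0); repeat destruct (Rle_dec _ S); lra.
Qed.

Lemma cl_id S v : 0 <= v <= S -> cl S v = v.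
Proof. intros. unfold cl, Rmin, Rmax. destruct (Rle_dec v 0); destruct (Rle_dec _ S); lra. Qed.

Lemma cl_neg S v : 0 <= S -> v < 0 -> cl S v = 0.
Proof. intros. unfold cl, Rmin, Rmax. destruct (Rle_dec v 0); destruct (Rle_dec _ S); lra. Qed.

Lemma n1_clv S a b : 0 <= S -> n1 (clv S a) (clv S b) <= n1 a b.
Proof. intros. unfold n1, clv, c1, c2, c3; simpl. pose proof (cl_lip S (fst (fst a)) (fst (fst b)) H).
  pose proof (cl_lip S (snd (fst a)) (snd (fst b)) H). pose proof (cl_lip S (snd a) (snd b) H). lra. Qed.

Lemma tri4 a b c d : Rabs (a + b + c + d) <= Rabs a + Rabs b + Rabs c + Rabs d.
Proof.
  eapply Rle_trans. apply Rabs_triang. eapply Rle_trans. apply Rplus_le_compat_r. apply Rabs_triang.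
  eapply Rle_trans. apply Rplus_le_compat_r. apply Rplus_le_compat_r. apply Rabs_triang. lra.
Qed.

Lemma abs_scal k x B : 0 <= k -> Rabs x <= B -> Rabs (k * x) <= k * B.
Proof. intros. rewrite Rabs_mult, Rabs_right by lra. apply Rmult_le_compat_l; auto. Qed.

Section Lip.
Variables (r rho sigma mu delta nu eta gamma alpha Ap S : R).
Hypotheses (Hr : 0 < r < 1) (Hrho : 0 < rho) (Hsigma : 0 < sigma) (Hmu : 0 < mu)
  (Hdelta : 0 < delta) (Hnu : 0 < nu) (Heta : 0 < eta) (Hgamma : 1 <= gamma)
  (Halpha : 0 <= alpha <= 1) (HAp : 0 < Ap) (HS : 0 <= S).

Definition Lm := rho * (1 + S * sigma) + (alpha + nu * gamma) * (S / Ap + 1) + mu + eta + delta.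

Lemma main_lip_box M A U M' A' U' :
  0 <= M <= S -> 0 <= A <= S -> 0 <= U <= S -> 0 <= M' <= S -> 0 <= A' <= S -> 0 <= U' <= S ->
  forall i, Rabs (ci i (main_field r rho sigma mu delta nu eta gamma alpha Ap (M, A, U)) -
                  ci i (main_field r rho sigma mu delta nu eta gamma alpha Ap (M', A', U')))
            <= Lm * n1 (M, A, U) (M', A', U').
Proof.
  intros HM HA HU HM' HA' HU' i.
  set (n := n1 (M, A, U) (M', A', U')).
  assert (HnM : Rabs (M - M') <= n) by (unfold n, n1, c1, c2, c3; simpl; pose proof (Rabs_pos (A - A')); pose proof (Rabs_pos (U - U')); lra).
  assert (HnA : Rabs (A - A') <= n) by (unfold n, n1, c1, c2, c3; simpl; pose proof (Rabs_pos (M - M')); pose proof (Rabs_pos (U - U')); lra).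
  assert (HnU : Rabs (U - U') <= n) by (unfold n, n1, c1, c2, c3; simpl; pose proof (Rabs_pos (A - A')); pose proof (Rabs_pos (M - M')); lra).
  assert (Hn : n = Rabs (M - M') + Rabs (A - A') + Rabs (U - U')) by reflexivity.
  set (e := exp (- sigma * (M + A + U))). set (e' := exp (- sigma * (M' + A' + U'))).
  assert (He : Rabs e <= 1) by (unfold e; rewrite Rabs_right by (apply Rle_ge, Rlt_le, exp_pos); apply exp_le1; nra).
  assert (Hee : Rabs (e - e') <= sigma * n).
  { unfold e, e'. eapply Rle_trans. apply exp_lip; nra.
    replace (- sigma * (M + A + U) - - sigma * (M' + A' + U')) with (- sigma * ((M - M') + (A - A') + (U - U'))) by ring.
    rewrite Rabs_mult, Rabs_Ropp, Rabs_right by lra. apply Rmult_le_compat_l. lra.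
    rewrite Hn. eapply Rle_trans. apply Rabs_triang. pose proof (Rabs_triang (M - M') (A - A')). lra. }
  set (g := Ap / (Ap + A)). set (g' := Ap / (Ap + A')).
  assert (Hgg : Rabs (g - g') <= / Ap * n) by (eapply Rle_trans; [apply g_lip; lra| apply Rmult_le_compat_l; [left; apply Rinv_0_lt_compat; lra| auto]]).
  assert (Hg : Rabs g <= 1) by (unfold g; rewrite Rabs_right; [apply g_bounds; lra| apply Rle_ge, Rlt_le, g_bounds; lra]).
  assert (Hg' : Rabs g' <= 1) by (unfold g'; rewrite Rabs_right; [apply g_bounds; lra| apply Rle_ge, Rlt_le, g_bounds; lra]).
  assert (HSA : 0 <= S / Ap) by (unfold Rdiv; apply Rmult_le_pos; [lra| left; apply Rinv_0_lt_compat; lra]).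
  assert (DUe : Rabs (U * e - U' * e') <= (1 + S * sigma) * n).
  { eapply Rle_trans. apply (prod_lip U e U' e' S 1). rewrite Rabs_right; lra. auto.
    assert (S * Rabs (e - e') <= S * (sigma * n)) by (apply Rmult_le_compat_l; auto). nra. }
  assert (Dg : Rabs (g * M - g' * M') <= (S / Ap + 1) * n).
  { eapply Rle_trans. apply (prod_lip g M g' M' 1 S); auto. rewrite Rabs_right; lra.
    assert (S * Rabs (g - g') <= S * (/ Ap * n)) by (apply Rmult_le_compat_l; auto).
    unfold Rdiv. nra. }
  assert (Dw : Rabs (M * (1 - g) - M' * (1 - g')) <= (S / Ap + 1) * n).
  { eapply Rle_trans. apply (prod_lip M (1 - g) M' (1 - g') S 1). rewrite Rabs_right; lra.
    unfold g. rewrite Rabs_right. pose proof (g_bounds Ap A HAp ltac:(lra)). lra.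
    pose proof (g_bounds Ap A HAp ltac:(lra)). lra.
    replace (1 - g - (1 - g')) with (- (g - g')) by ring. rewrite Rabs_Ropp.
    assert (S * Rabs (g - g') <= S * (/ Ap * n)) by (apply Rmult_le_compat_l; auto).
    unfold Rdiv. nra. }
  assert (Hng : 0 <= nu * gamma) by nra.
  assert (HL : 0 <= rho * (1 + S * sigma)) by (apply Rmult_le_pos; nra).
  assert (Hlm : Lm = rho * (1 + S * sigma) + (alpha + nu * gamma) * (S / Ap + 1) + mu + eta + delta) by reflexivity.
  unfold main_field, ci.
  destruct i as [|[|]]; unfold c1, c2, c3; simpl; fold e e' g g'.
  - replace (r * rho * U * e - alpha * g * M - mu * M - (r * rho * U' * e' - alpha * g' * M' - mu * M'))
      with ((r * rho) * (U * e - U' * e') + (- alpha) * (g * M - g' * M') + (- mu) * (M - M') + 0) by ring.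
    eapply Rle_trans. apply tri4. rewrite Rabs_R0.
    rewrite (Rabs_mult (r * rho)), (Rabs_mult (- alpha)), (Rabs_mult (- mu)).
    rewrite (Rabs_right (r * rho)) by nra. rewrite (Rabs_left1 (- mu)) by lra. rewrite (Rabs_left1 (- alpha)) by lra.
    rewrite !Ropp_involutive.
    assert (0 <= n) by (rewrite Hn; pose proof (Rabs_pos (M - M')); pose proof (Rabs_pos (A - A')); pose proof (Rabs_pos (U - U')); lra).
    assert (r * rho * Rabs (U * e - U' * e') <= r * rho * ((1 + S * sigma) * n)) by (apply Rmult_le_compat_l; nra).
    assert (alpha * Rabs (g * M - g' * M') <= alpha * ((S / Ap + 1) * n)) by (apply Rmult_le_compat_l; lra).
    assert (mu * Rabs (M - M') <= mu * n) by (apply Rmult_le_compat_l; lra).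
    assert (0 <= (1 + S * sigma) * n) by (apply Rmult_le_pos; nra).
    assert (0 <= (S / Ap + 1) * n) by (apply Rmult_le_pos; lra).
    assert (0 <= rho * ((1 + S * sigma) * n)) by (apply Rmult_le_pos; lra).
    assert (r * rho * ((1 + S * sigma) * n) <= rho * ((1 + S * sigma) * n)) by nra.
    assert (nu * gamma * ((S / Ap + 1) * n) >= 0) by nra.
    assert (eta * n >= 0) by nra. assert (delta * n >= 0) by nra.
    rewrite Hlm. 
    replace ((rho * (1 + S * sigma) + (alpha + nu * gamma) * (S / Ap + 1) + mu + eta + delta) * n) with
      (rho * ((1 + S * sigma) * n) + alpha * ((S / Ap + 1) * n) + nu * gamma * ((S / Ap + 1) * n) + mu * n + eta * n + delta * n) by ring.
    lra.
  - replace ((1 - r) * rho * U * e - nu * (gamma * M / (Ap + A)) * A + eta * U - delta * A -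
      ((1 - r) * rho * U' * e' - nu * (gamma * M' / (Ap + A')) * A' + eta * U' - delta * A'))
      with (((1 - r) * rho) * (U * e - U' * e') + (- (nu * gamma)) * (M * (1 - g) - M' * (1 - g')) + eta * (U - U') + (- delta) * (A - A')).
    2:{ rewrite !hA_eq by lra. fold g g'. ring. }
    eapply Rle_trans. apply tri4.
    rewrite (Rabs_mult ((1 - r) * rho)), (Rabs_mult (- (nu * gamma))), (Rabs_mult eta), (Rabs_mult (- delta)).
    rewrite (Rabs_right ((1 - r) * rho)) by nra. rewrite (Rabs_left1 (- (nu * gamma))) by lra.
    rewrite (Rabs_left1 (- delta)) by lra. rewrite (Rabs_right eta) by lra.
    rewrite !Ropp_involutive.
    assert (0 <= n) by (rewrite Hn; pose proof (Rabs_pos (M - M')); pose proof (Rabs_pos (A - A')); pose proof (Rabs_pos (U - U')); lra).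
    assert ((1 - r) * rho * Rabs (U * e - U' * e') <= (1 - r) * rho * ((1 + S * sigma) * n)) by (apply Rmult_le_compat_l; nra).
    assert (nu * gamma * Rabs (M * (1 - g) - M' * (1 - g')) <= nu * gamma * ((S / Ap + 1) * n)) by (apply Rmult_le_compat_l; lra).
    assert (eta * Rabs (U - U') <= eta * n) by (apply Rmult_le_compat_l; lra).
    assert (delta * Rabs (A - A') <= delta * n) by (apply Rmult_le_compat_l; lra).
    assert (0 <= (1 + S * sigma) * n) by (apply Rmult_le_pos; nra).
    assert (0 <= (S / Ap + 1) * n) by (apply Rmult_le_pos; lra).
    assert (0 <= rho * ((1 + S * sigma) * n)) by (apply Rmult_le_pos; lra).
    assert ((1 - r) * rho * ((1 + S * sigma) * n) <= rho * ((1 + S * sigma) * n)) by nra.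
    assert (alpha * ((S / Ap + 1) * n) >= 0) by nra.
    assert (mu * n >= 0) by nra.
    rewrite Hlm.
    replace ((rho * (1 + S * sigma) + (alpha + nu * gamma) * (S / Ap + 1) + mu + eta + delta) * n) with
      (rho * ((1 + S * sigma) * n) + alpha * ((S / Ap + 1) * n) + nu * gamma * ((S / Ap + 1) * n) + mu * n + eta * n + delta * n) by ring.
    lra.
  - replace (nu * (gamma * M / (Ap + A)) * A - eta * U - delta * U -
      (nu * (gamma * M' / (Ap + A')) * A' - eta * U' - delta * U'))
      with ((nu * gamma) * (M * (1 - g) - M' * (1 - g')) + (- eta) * (U - U') + (- delta) * (U - U') + 0).
    2:{ rewrite !hA_eq by lra. fold g g'. ring. }
    eapply Rle_trans. apply tri4. rewrite Rabs_R0.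
    rewrite (Rabs_mult (nu * gamma)), (Rabs_mult (- eta)), (Rabs_mult (- delta)).
    rewrite (Rabs_right (nu * gamma)) by lra. rewrite (Rabs_left1 (- eta)) by lra.
    rewrite (Rabs_left1 (- delta)) by lra.
    rewrite !Ropp_involutive.
    assert (0 <= n) by (rewrite Hn; pose proof (Rabs_pos (M - M')); pose proof (Rabs_pos (A - A')); pose proof (Rabs_pos (U - U')); lra).
    assert (nu * gamma * Rabs (M * (1 - g) - M' * (1 - g')) <= nu * gamma * ((S / Ap + 1) * n)) by (apply Rmult_le_compat_l; lra).
    assert (eta * Rabs (U - U') <= eta * n) by (apply Rmult_le_compat_l; lra).
    assert (delta * Rabs (U - U') <= delta * n) by (apply Rmult_le_compat_l; lra).
    assert (0 <= (1 + S * sigma) * n) by (apply Rmult_le_pos; nra).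
    assert (0 <= (S / Ap + 1) * n) by (apply Rmult_le_pos; lra).
    assert (0 <= rho * ((1 + S * sigma) * n)) by (apply Rmult_le_pos; lra).
    assert (alpha * ((S / Ap + 1) * n) >= 0) by nra.
    assert (mu * n >= 0) by nra.
    rewrite Hlm.
    replace ((rho * (1 + S * sigma) + (alpha + nu * gamma) * (S / Ap + 1) + mu + eta + delta) * n) with
      (rho * ((1 + S * sigma) * n) + alpha * ((S / Ap + 1) * n) + nu * gamma * ((S / Ap + 1) * n) + mu * n + eta * n + delta * n) by ring.
    lra.
Qed.

End Lip.

Section Exist.
Variables (r rho sigma mu delta nu eta gamma alpha Ap S : R).
Hypotheses (Hr : 0 < r < 1) (Hrho : 0 < rho) (Hsigma : 0 < sigma) (Hmu : 0 < mu)
  (Hdelta : 0 < delta) (Hnu : 0 < nu) (Heta : 0 < eta) (Hgamma : 1 <= gamma)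
  (Halpha : 0 <= alpha <= 1) (HAp : 0 < Ap) (HS : 0 <= S).

Definition mainF := main_field r rho sigma mu delta nu eta gamma alpha Ap.
Definition Ft (X : vec3) : vec3 := mainF (clv S X).

Lemma Ft_lip i a b : Rabs (ci i (Ft a) - ci i (Ft b)) <= (Lm rho sigma mu delta nu eta gamma alpha Ap S + 1) * n1 a b.
Proof.
  unfold Ft, mainF, clv.
  eapply Rle_trans. eapply (main_lip_box r rho sigma mu delta nu eta gamma alpha Ap S); try eassumption; apply cl_range; assumption.
  pose proof (n1_clv S a b HS). unfold clv in H.
  assert (0 <= n1 (cl S (c1 a), cl S (c2 a), cl S (c3 a)) (cl S (c1 b), cl S (c2 b), cl S (c3 b))).
  { unfold n1. pose proof (Rabs_pos (c1 (cl S (c1 a), cl S (c2 a), cl S (c3 a)) - c1 (cl S (c1 b), cl S (c2 b), cl S (c3 b)))).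
    pose proof (Rabs_pos (c2 (cl S (c1 a), cl S (c2 a), cl S (c3 a)) - c2 (cl S (c1 b), cl S (c2 b), cl S (c3 b)))).
    pose proof (Rabs_pos (c3 (cl S (c1 a), cl S (c2 a), cl S (c3 a)) - c3 (cl S (c1 b), cl S (c2 b), cl S (c3 b)))). lra. }
  assert (0 <= Lm rho sigma mu delta nu eta gamma alpha Ap S).
  { unfold Lm. assert (0 <= S / Ap) by (unfold Rdiv; apply Rmult_le_pos; [lra| left; apply Rinv_0_lt_compat; lra]).
    assert (0 <= rho * (1 + S * sigma)) by (apply Rmult_le_pos; nra).
    assert (0 <= (alpha + nu * gamma) * (S / Ap + 1)) by (apply Rmult_le_pos; nra). lra. }
  nra.
Qed.

Lemma Lm_nonneg : 0 <= Lm rho sigma mu delta nu eta gamma alpha Ap S.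
Proof.
  unfold Lm. assert (0 <= S / Ap) by (unfold Rdiv; apply Rmult_le_pos; [lra| left; apply Rinv_0_lt_compat; lra]).
  assert (0 <= rho * (1 + S * sigma)) by (apply Rmult_le_pos; nra).
  assert (0 <= (alpha + nu * gamma) * (S / Ap + 1)) by (apply Rmult_le_pos; nra). lra.
Qed.

Lemma Ft_bound i a : Rabs (ci i (Ft a)) <= Lm rho sigma mu delta nu eta gamma alpha Ap S * (3 * S).
Proof.
  pose proof Lm_nonneg.
  assert (H0 : ci i (mainF (0, 0, 0)) = 0).
  { unfold mainF, main_field. destruct i as [|[|]]; unfold ci, c1, c2, c3; simpl; field; lra. }
  unfold Ft, clv.
  replace (ci i (mainF (cl S (c1 a), cl S (c2 a), cl S (c3 a)))) with
    (ci i (mainF (cl S (c1 a), cl S (c2 a), cl S (c3 a))) - ci i (mainF (0, 0, 0))) by lra.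
  eapply Rle_trans. { eapply (main_lip_box r rho sigma mu delta nu eta gamma alpha Ap S); try eassumption; try (apply cl_range; assumption); try lra. }
  apply Rmult_le_compat_l; auto.
  unfold n1, c1, c2, c3; simpl. rewrite !Rminus_0_r.
  pose proof (cl_range S (fst (fst a)) HS). pose proof (cl_range S (snd (fst a)) HS). pose proof (cl_range S (snd a) HS).
  rewrite !Rabs_right by lra. lra.
Qed.

Lemma Ft_sign X :
  (c1 X < 0 -> c1 (Ft X) >= 0) /\ (c2 X < 0 -> c2 (Ft X) >= 0) /\ (c3 X < 0 -> c3 (Ft X) >= 0).
Proof.
  destruct X as [[M A] U]. unfold Ft, mainF, clv, main_field, c1, c2, c3; simpl.
  pose proof (cl_range S M HS). pose proof (cl_range S A HS). pose proof (cl_range S U HS).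
  set (e := exp (- sigma * (cl S M + cl S A + cl S U))). assert (0 < e) by apply exp_pos.
  split; [|split]; intros Hn.
  - rewrite (cl_neg S M) by auto.
    assert (0 <= r * rho * cl S U * e). { apply Rmult_le_pos; [apply Rmult_le_pos|]; nra. } lra.
  - rewrite (cl_neg S A) by auto. 
    assert (0 <= (1 - r) * rho * cl S U * e). { apply Rmult_le_pos; [apply Rmult_le_pos|]; nra. }
    assert (0 <= eta * cl S U) by nra. lra.
  - rewrite (cl_neg S U) by auto.
    assert (0 <= gamma * cl S M / (Ap + cl S A)) by (apply Rmult_le_pos; [nra| left; apply Rinv_0_lt_compat; lra]).
    assert (0 <= nu * (gamma * cl S M / (Ap + cl S A)) * cl S A). { apply Rmult_le_pos; [apply Rmult_le_pos|]; lra. }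
    lra.
Qed.

Lemma xe_le (sigma' y : R) : 0 < sigma' -> 0 <= y -> y * exp (- sigma' * y) <= / sigma'.
Proof.
  intros Hs Hy. pose proof (exp_ineq1_le (sigma' * y)).
  assert (E : exp (- sigma' * y) * exp (sigma' * y) = 1).
  { rewrite <- exp_plus. replace (- sigma' * y + sigma' * y) with 0 by ring. apply exp_0. }
  pose proof (exp_pos (- sigma' * y)). pose proof (exp_pos (sigma' * y)).
  apply Rmult_le_reg_l with sigma'; auto. rewrite Rinv_r by lra.
  assert (sigma' * y <= exp (sigma' * y)) by lra.
  assert (sigma' * y * exp (- sigma' * y) <= exp (sigma' * y) * exp (- sigma' * y)) by (apply Rmult_le_compat_r; lra).
  nra.
Qed.

Lemma Ft_sum X : rho / sigma <= Rmin mu delta * S -> 0 <= c1 X -> 0 <= c2 X -> 0 <= c3 X -> S < c1 X + c2 X + c3 X ->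
  c1 (Ft X) + c2 (Ft X) + c3 (Ft X) <= 0.
Proof.
  intros HSS. destruct X as [[M A] U]. unfold Ft, mainF, clv, main_field, c1, c2, c3; simpl. intros HM HA HU HN.
  pose proof (cl_range S M HS). pose proof (cl_range S A HS). pose proof (cl_range S U HS).
  set (m := cl S M) in *. set (a := cl S A) in *. set (u := cl S U) in *.
  assert (Hsum : S <= m + a + u).
  { unfold m, a, u, cl, Rmin, Rmax. destruct (Rle_dec M 0), (Rle_dec A 0), (Rle_dec U 0);
    repeat destruct (Rle_dec _ S); lra. }
  rewrite !hA_eq by lra.
  replace (r * rho * u * exp (- sigma * (m + a + u)) - alpha * (Ap / (Ap + a)) * m - mu * m +
   ((1 - r) * rho * u * exp (- sigma * (m + a + u)) - nu * gamma * m * (1 - Ap / (Ap + a)) + eta * u - delta * a) +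
   (nu * gamma * m * (1 - Ap / (Ap + a)) - eta * u - delta * u))
   with (rho * (u * exp (- sigma * (m + a + u))) - alpha * (Ap / (Ap + a)) * m - mu * m - delta * a - delta * u) by ring.
  pose proof (xe_le sigma (m + a + u) Hsigma ltac:(lra)).
  assert (u * exp (- sigma * (m + a + u)) <= (m + a + u) * exp (- sigma * (m + a + u))).
  { apply Rmult_le_compat_r. left; apply exp_pos. lra. }
  assert (rho * (u * exp (- sigma * (m + a + u))) <= rho / sigma).
  { unfold Rdiv. apply Rmult_le_compat_l; lra. }
  assert (0 <= alpha * (Ap / (Ap + a)) * m).
  { apply Rmult_le_pos; [apply Rmult_le_pos|]; try lra. apply Rlt_le, Rdiv_lt_0_compat; lra. }
  assert (Rmin mu delta * S <= Rmin mu delta * (m + a + u)).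
  { apply Rmult_le_compat_l; auto. apply Rmin_glb; lra. }
  assert (Rmin mu delta * (m + a + u) <= mu * m + delta * a + delta * u).
  { pose proof (Rmin_l mu delta). pose proof (Rmin_r mu delta). nra. }
  lra.
Qed.

Lemma main_exists X0 : 0 <= c1 X0 -> 0 <= c2 X0 -> 0 <= c3 X0 -> c1 X0 + c2 X0 + c3 X0 <= S ->
  rho / sigma <= Rmin mu delta * S ->
  exists x, is_solution mainF x /\ x 0 = X0.
Proof.
  intros H1 H2 H3 HN HSS.
  destruct (picard Ft (Lm rho sigma mu delta nu eta gamma alpha Ap S + 1) (Lm rho sigma mu delta nu eta gamma alpha Ap S * (3 * S)) X0)
    as [x [Hx Hx0]].
  { pose proof Lm_nonneg; lra. }
  { pose proof Lm_nonneg. nra. }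
  { apply Ft_lip. }
  { apply Ft_bound. }
  pose proof (sol_props Ft x Hx) as [C1 [C2 [C3 [D1 [D2 D3]]]]].
  assert (Hneg : forall t, t <= 0 -> xh x t = X0).
  { intros t Ht. unfold xh. rewrite Rmax_right by lra. auto. }
  assert (Hnn : forall t, 0 <= t -> 0 <= c1 (xh x t) /\ 0 <= c2 (xh x t) /\ 0 <= c3 (xh x t)).
  { apply (nonneg3_lem _ _ _ (fun t => c1 (Ft (x t))) (fun t => c2 (Ft (x t))) (fun t => c3 (Ft (x t))) 1 Rlt_0_1 C1 C2 C3 D1 D2 D3).
    - intros t Ht. rewrite Hneg by auto. auto.
    - intros T HT. exists 0. split. lra. intros t Ht _.
      rewrite xh_pos by lra. rewrite !Rmult_0_l. apply Ft_sign. }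
  assert (Hsum : forall t, 0 <= t -> 0 <= S - (c1 (xh x t) + c2 (xh x t) + c3 (xh x t))).
  { intros t Ht.
    refine (proj1 (nonneg3_lem (fun t => S - (c1 (xh x t) + c2 (xh x t) + c3 (xh x t))) (fun _ => 1) (fun _ => 1)
      (fun t => - (c1 (Ft (x t)) + c2 (Ft (x t)) + c3 (Ft (x t)))) (fun _ => 0) (fun _ => 0) 1 Rlt_0_1 _ _ _ _ _ _ _ _ t Ht)).
    - intros s. apply continuity_pt_minus. apply continuity_pt_const; intros u v; auto.
      apply continuity_pt_plus; [apply continuity_pt_plus|]; auto.
    - intros s; apply continuity_pt_const; intros u v; auto.
    - intros s; apply continuity_pt_const; intros u v; auto.
    - intros s Hs.
      assert (Hd : is_derive (fun t => c1 (xh x t) + c2 (xh x t) + c3 (xh x t)) s (c1 (Ft (x s)) + c2 (Ft (x s)) + c3 (Ft (x s)))).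
      { apply (is_derive_plus (K:=R_AbsRing) (V:=R_NormedModule)); [apply (is_derive_plus (K:=R_AbsRing) (V:=R_NormedModule))|]; auto. }
      pose proof (is_derive_minus (K:=R_AbsRing) (V:=R_NormedModule) (fun _ => S) _ s zero _ (is_derive_const (K:=R_AbsRing) (V:=R_NormedModule) S s) Hd) as H.
      unfold minus, zero, plus, opp in H; simpl in H. rewrite Rplus_0_l in H. exact H.
    - intros s _; apply (is_derive_const (K:=R_AbsRing) (V:=R_NormedModule)).
    - intros s _; apply (is_derive_const (K:=R_AbsRing) (V:=R_NormedModule)).
    - intros s Hs. rewrite Hneg by auto. lra.
    - intros T HT. exists 0. split. lra. intros s Hs _. rewrite !Rmult_0_l.
      split; [|split]; intros Hn; try lra.
      rewrite xh_pos in Hn by lra. pose proof (Hnn s ltac:(lra)) as [P1 [P2 P3]]. rewrite xh_pos in P1, P2, P3 by lra.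
      pose proof (Ft_sum (x s) HSS P1 P2 P3 ltac:(lra)). lra. }
  exists x. split; auto.
  destruct Hx as [Hd Hr0]. split; auto.
  intros t Ht.
  pose proof (Hnn t ltac:(lra)) as [P1 [P2 P3]]. pose proof (Hsum t ltac:(lra)) as P4.
  rewrite xh_pos in P1, P2, P3, P4 by lra.
  assert (E : Ft (x t) = mainF (x t)).
  { unfold Ft, clv. destruct (x t) as [[M A] U]. unfold c1, c2, c3 in *; simpl in *.
    rewrite !cl_id by lra. reflexivity. }
  rewrite <- E. apply Hd; auto.
Qed.

End Exist.

Lemma vec3_eta v : v = (c1 v, c2 v, c3 v).
Proof. destruct v as [[a b] c]; reflexivity. Qed.

Lemma msq_small u Ap : 0 < Ap -> msq u < Ap * Ap / 4 -> - Ap / 2 < u.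
Proof.
  intros HAp H. destruct (Rlt_le_dec u 0). unfold msq in H. rewrite mn_neg in H by auto. nra. lra.
Qed.

Lemma bound3 (x : R -> vec3) T : 0 <= T ->
  (forall t, continuity_pt (fun s => c1 (xh x s)) t) ->
  (forall t, continuity_pt (fun s => c2 (xh x s)) t) ->
  (forall t, continuity_pt (fun s => c3 (xh x s)) t) ->
  exists B, 0 <= B /\ forall t, 0 <= t <= T -> Rabs (c1 (x t)) <= B /\ Rabs (c2 (x t)) <= B /\ Rabs (c3 (x t)) <= B.
Proof.
  intros HT H1 H2 H3.
  destruct (cont_bound _ T HT H1) as [B1 [P1 Q1]].
  destruct (cont_bound _ T HT H2) as [B2 [P2 Q2]].
  destruct (cont_bound _ T HT H3) as [B3 [P3 Q3]].
  exists (B1 + B2 + B3). split. lra. intros t Ht.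
  specialize (Q1 t Ht); specialize (Q2 t Ht); specialize (Q3 t Ht). rewrite xh_pos in * by lra. lra.
Qed.

Section Main.
Variables (r rho sigma mu delta nu eta gamma alpha Ap : R).
Hypotheses (Hr : 0 < r < 1) (Hrho : 0 < rho) (Hsigma : 0 < sigma) (Hmu : 0 < mu)
  (Hdelta : 0 < delta) (Hnu : 0 < nu) (Heta : 0 < eta) (Hgamma : 1 <= gamma)
  (Halpha : 0 <= alpha <= 1) (HAp : 0 < Ap).

Let mF := main_field r rho sigma mu delta nu eta gamma alpha Ap.
Let aF := aux_field r rho sigma mu delta nu eta gamma alpha Ap.

Lemma nonneg_gen (F : vec3 -> vec3) (x : R -> vec3) :
  is_solution F x -> nonneg3 (x 0) ->
  (forall M A U B, 0 <= B -> Rabs M <= B -> Rabs A <= B -> Rabs U <= B -> - Ap / 2 < A ->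
    (M < 0 -> c1 (F (M, A, U)) >= kap r rho sigma nu eta gamma alpha Ap B * (mn M + mn A + mn U)) /\
    (A < 0 -> c2 (F (M, A, U)) >= kap r rho sigma nu eta gamma alpha Ap B * (mn M + mn A + mn U)) /\
    (U < 0 -> c3 (F (M, A, U)) >= kap r rho sigma nu eta gamma alpha Ap B * (mn M + mn A + mn U))) ->
  forall t, 0 <= t -> 0 <= c1 (x t) /\ 0 <= c2 (x t) /\ 0 <= c3 (x t).
Proof.
  intros Hx H0 Hineq.
  pose proof (sol_props F x Hx) as [C1 [C2 [C3 [D1 [D2 D3]]]]].
  cut (forall t, 0 <= t -> 0 <= c1 (xh x t) /\ 0 <= c2 (xh x t) /\ 0 <= c3 (xh x t)).
  { intros G t Ht. rewrite <- (xh_pos x t Ht). apply G; auto. }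
  apply (nonneg3_lem _ _ _ (fun t => c1 (F (x t))) (fun t => c2 (F (x t))) (fun t => c3 (F (x t))) (Ap * Ap / 4)); auto.
  - nra.
  - intros s Hs. unfold xh. rewrite Rmax_right by lra. destruct H0 as [P1 [P2 P3]]. unfold c1, c2, c3, E0 in *; simpl in *. lra.
  - intros T HT. destruct (bound3 x T ltac:(lra) C1 C2 C3) as [B [HB HBt]].
    exists (kap r rho sigma nu eta gamma alpha Ap B). split. apply kap_pos; auto.
    intros s Hs Hv. rewrite !xh_pos in * by lra.
    destruct (HBt s ltac:(lra)) as [B1 [B2 B3]].
    pose proof (msq_ge0 (c1 (x s))); pose proof (msq_ge0 (c2 (x s))); pose proof (msq_ge0 (c3 (x s))).
    assert (HA2 : - Ap / 2 < c2 (x s)) by (apply msq_small; auto; lra).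
    rewrite (vec3_eta (x s)). apply Hineq; auto.
Qed.

Lemma main_nonneg x : is_solution mF x -> nonneg3 (x 0) ->
  forall t, 0 <= t -> 0 <= c1 (x t) /\ 0 <= c2 (x t) /\ 0 <= c3 (x t).
Proof.
  intros Hx H0. apply (nonneg_gen mF x Hx H0).
  intros. unfold mF. apply main_ineq; auto.
Qed.

Lemma aux_nonneg y : is_solution aF y -> nonneg3 (y 0) ->
  forall t, 0 <= t -> 0 <= c1 (y t) /\ 0 <= c2 (y t) /\ 0 <= c3 (y t).
Proof.
  intros Hy H0. apply (nonneg_gen aF y Hy H0).
  intros. unfold aF. apply aux_ineq; auto.
Qed.

Lemma comparison x y : is_solution mF x -> is_solution aF y -> nonneg3 (x 0) -> y 0 = x 0 ->
  forall t, 0 <= t -> c1 (x t) <= c1 (y t) /\ c2 (x t) <= c2 (y t) /\ c3 (x t) <= c3 (y t).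
Proof.
  intros Hx Hy H0 Hyx t Ht.
  pose proof (main_nonneg x Hx H0) as Nx. assert (H0' : nonneg3 (y 0)) by (rewrite Hyx; auto).
  pose proof (aux_nonneg y Hy H0') as Ny.
  pose proof (sol_props mF x Hx) as [C1 [C2 [C3 [D1 [D2 D3]]]]].
  pose proof (sol_props aF y Hy) as [C1' [C2' [C3' [D1' [D2' D3']]]]].
  assert (Hd : forall (f g : R -> R) s df dg, is_derive f s df -> is_derive g s dg -> is_derive (fun t => g t - f t) s (dg - df)).
  { intros f g s df dg Hf Hg. apply (is_derive_minus (K:=R_AbsRing) (V:=R_NormedModule)); auto. }
  assert (Q : forall t, 0 <= t -> 0 <= c1 (xh y t) - c1 (xh x t) /\ 0 <= c2 (xh y t) - c2 (xh x t) /\ 0 <= c3 (xh y t) - c3 (xh x t)).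
  { apply (nonneg3_lem _ _ _ (fun t => c1 (aF (y t)) - c1 (mF (x t))) (fun t => c2 (aF (y t)) - c2 (mF (x t)))
      (fun t => c3 (aF (y t)) - c3 (mF (x t))) 1 Rlt_0_1); auto.
    - intros s; apply continuity_pt_minus; auto.
    - intros s; apply continuity_pt_minus; auto.
    - intros s; apply continuity_pt_minus; auto.
    - intros s Hs. unfold xh. rewrite Rmax_right by lra. rewrite Hyx. lra.
    - intros T HT. destruct (bound3 x T ltac:(lra) C1 C2 C3) as [B [HB HBt]].
      destruct (bound3 y T ltac:(lra) C1' C2' C3') as [B' [HB' HBt']].
      exists (kap r rho sigma nu eta gamma alpha Ap (B + B')). split. apply kap_pos; auto; lra.
      intros s Hs _. rewrite !xh_pos by lra.
      destruct (HBt s ltac:(lra)) as [B1 [B2 B3]]. destruct (HBt' s ltac:(lra)) as [B1' [B2' B3']].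
      destruct (Nx s ltac:(lra)) as [P1 [P2 P3]]. destruct (Ny s ltac:(lra)) as [P1' [P2' P3']].
      rewrite Rabs_right in * by lra.
      rewrite (vec3_eta (x s)), (vec3_eta (y s)).
      unfold mF, aF. apply comp_ineq; auto; unfold c1, c2, c3 in *; simpl; lra. }
  specialize (Q t Ht). rewrite !xh_pos in Q by lra. lra.
Qed.

Lemma squeeze (x y : R -> vec3) : (forall t, 0 <= t -> 0 <= c1 (x t) <= c1 (y t) /\ 0 <= c2 (x t) <= c2 (y t) /\ 0 <= c3 (x t) <= c3 (y t)) ->
  converges_to y E0 -> converges_to x E0.
Proof.
  intros H [L1 [L2 L3]].
  unfold converges_to, E0, c1, c2, c3 in *; simpl in *.
  split; [|split].
  - apply (is_lim_le_le_loc (fun _ => 0) (fun t => fst (fst (y t)))); [| apply (is_lim_const 0) | exact L1].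
    exists 0; intros t Ht; specialize (H t ltac:(lra)); unfold c1, c2, c3 in H; lra.
  - apply (is_lim_le_le_loc (fun _ => 0) (fun t => snd (fst (y t)))); [| apply (is_lim_const 0) | exact L2].
    exists 0; intros t Ht; specialize (H t ltac:(lra)); unfold c1, c2, c3 in H; lra.
  - apply (is_lim_le_le_loc (fun _ => 0) (fun t => snd (y t))); [| apply (is_lim_const 0) | exact L3].
    exists 0; intros t Ht; specialize (H t ltac:(lra)); unfold c1, c2, c3 in H; lra.
Qed.

Lemma main_basin X0 : in_basin aF E0 X0 -> nonneg3 X0 -> in_basin mF E0 X0.
Proof.
  intros [[y [Hy Hy0]] Hconv] HX0. split.
  - set (m := Rmin mu delta).
    assert (Hm : 0 < m) by (unfold m; apply Rmin_glb_lt; lra).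
    set (S := Rmax (c1 X0 + c2 X0 + c3 X0) (rho / sigma / m)).
    assert (HS0 : 0 <= S).
    { unfold S. eapply Rle_trans. 2: apply Rmax_r. unfold Rdiv. apply Rmult_le_pos; [apply Rmult_le_pos|]; try lra;
      left; apply Rinv_0_lt_compat; lra. }
    destruct HX0 as [P1 [P2 P3]]. unfold E0, c1, c2, c3 in P1, P2, P3; simpl in P1, P2, P3.
    apply (main_exists r rho sigma mu delta nu eta gamma alpha Ap S); auto.
    + unfold S. apply Rmax_l.
    + fold m. assert (rho / sigma / m <= S) by (unfold S; apply Rmax_r).
      replace (rho / sigma) with (m * (rho / sigma / m)) by (field; lra). apply Rmult_le_compat_l; lra.
  - intros x Hx Hx0. apply (squeeze x y).
    + intros t Ht. rewrite <- Hx0 in HX0.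
      pose proof (main_nonneg x Hx HX0 t Ht). pose proof (comparison x y Hx Hy HX0 ltac:(congruence) t Ht). lra.
    + apply Hconv; auto.
Qed.

Lemma main_stable : stable_on_nonneg aF E0 -> (forall x0, nonneg3 x0 -> in_basin aF E0 x0) -> stable_on_nonneg mF E0.
Proof.
  intros Hst Hb eps Heps. destruct (Hst eps Heps) as [del [Hdel Hd]].
  exists del. split; auto. intros x Hx H0 B1 B2 B3 t Ht.
  destruct (Hb (x 0) H0) as [[y [Hy Hy0]] _].
  assert (Hy0' : nonneg3 (y 0)) by (rewrite Hy0; auto).
  rewrite <- Hy0 in B1, B2, B3.
  specialize (Hd y Hy Hy0' B1 B2 B3 t Ht).
  pose proof (main_nonneg x Hx H0 t Ht). pose proof (comparison x y Hx Hy H0 Hy0 t Ht).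
  unfold E0, c1, c2, c3 in *; simpl in *. rewrite !Rminus_0_r in *.
  destruct Hd as [Q1 [Q2 Q3]].
  rewrite !Rabs_right in * by lra. lra.
Qed.

End Main.

Theorem theorem2
  (r rho sigma mu delta nu eta gamma alpha Apcrit : R)
  (Hr : 0 < r < 1) (Hrho : 0 < rho) (Hsigma : 0 < sigma) (Hmu : 0 < mu)
  (Hdelta : 0 < delta) (Hnu : 0 < nu) (Heta : 0 < eta) (Hgamma : 1 <= gamma)
  (Halpha : 0 <= alpha <= 1)
  (HNM : N_M r rho mu delta nu eta gamma > 1)
  (* defining properties of the threshold \tilde A_p^{crit} (auxiliary system) *)
  (Hcrit_pos : 0 < Apcrit)
  (Hcrit_above : forall Ap, Apcrit < Ap ->
     (forall E, pos3 E ->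
        ~ is_equilibrium (aux_field r rho sigma mu delta nu eta gamma alpha Ap) E) /\
     GAS_on_nonneg (aux_field r rho sigma mu delta nu eta gamma alpha Ap) E0)
  (Hcrit_below : forall Ap, 0 < Ap < Apcrit ->
     exists E1 E2,
       pos3 E1 /\ pos3 E2 /\ lt3 E1 E2 /\
       is_equilibrium (aux_field r rho sigma mu delta nu eta gamma alpha Ap) E1 /\
       is_equilibrium (aux_field r rho sigma mu delta nu eta gamma alpha Ap) E2 /\
       (forall E, pos3 E ->
          is_equilibrium (aux_field r rho sigma mu delta nu eta gamma alpha Ap) E ->
          E = E1 \/ E = E2) /\
       (forall X, nonneg3 X -> lt3 X E1 ->
          in_basin (aux_field r rho sigma mu delta nu eta gamma alpha Ap) E0 X))
  (Ap : R) (HAp : 0 < Ap) :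
  (* (a) *)
  (Ap < Apcrit ->
     forall E1 E2 : vec3,
       pos3 E1 -> pos3 E2 -> lt3 E1 E2 ->
       is_equilibrium (aux_field r rho sigma mu delta nu eta gamma alpha Ap) E1 ->
       is_equilibrium (aux_field r rho sigma mu delta nu eta gamma alpha Ap) E2 ->
       (forall E, pos3 E ->
          is_equilibrium (aux_field r rho sigma mu delta nu eta gamma alpha Ap) E ->
          E = E1 \/ E = E2) ->
       forall X, nonneg3 X -> lt3 X E1 ->
         in_basin (main_field r rho sigma mu delta nu eta gamma alpha Ap) E0 X) /\
  (* (b) *)
  (Apcrit < Ap ->
     GAS_on_nonneg (main_field r rho sigma mu delta nu eta gamma alpha Ap) E0).
Proof.
  assert (Hirr : forall E, ~ lt3 E E) by (intros E [H _]; lra).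
  assert (Hasym : forall E F, lt3 E F -> ~ lt3 F E) by (intros E F [H _] [H' _]; lra).
  split.
  - intros HApc E1 E2 P1 P2 L12 Eq1 Eq2 Uniq X HX LX.
    destruct (Hcrit_below Ap (conj HAp HApc)) as [F1 [F2 [Q1 [Q2 [L' [Eq1' [Eq2' [Uniq' Hb]]]]]]]].
    assert (HE : E1 = F1).
    { destruct (Uniq' E1 P1 Eq1) as [|HE]; auto. exfalso.
      destruct (Uniq F1 Q1 Eq1') as [H'|H'].
      - subst. apply (Hirr F2); congruence.
      - subst. apply (Hasym E2 F2); auto. }
    subst E1. eapply main_basin; eauto.
  - intros HApc. destruct (Hcrit_above Ap HApc) as [_ [Hst Hb]]. split.
    + eapply main_stable; eauto.
    + intros x0 H. eapply main_basin; eauto.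
Qed.
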